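(* Let $\Omega=(x_l,x_r)\times(x_b,x_t)\subset\mathbb{R}^2$, $T>0$, and let $u:\overline{\Omega}\times[0,T]\to\mathbb{C}$ be such that $u$, $\partial_t u$ and all spatial partial derivatives of $u$ up to order $2$ are continuous on $\overline{\Omega}\times[0,T]$, $u(\mathbf{x},0)=0$ for all $\mathbf{x}\in\partial\Omega$, and $i\partial_t u+\partial_{x_1}^2u+\partial_{x_2}^2u=0$ on $\overline{\Omega}\times(0,T]$. Suppose that on each closed edge the high-frequency boundary condition holds: $$\partial_n u+e^{-i\pi/4}\partial_t^{1/2}u-\tfrac12 e^{i\pi/4}\,\partial_{x_2}^2\partial_t^{-1/2}u=0\ \text{ on }\overline{\Gamma_l}\cup\overline{\Gamma_r},\qquad \partial_n u+e^{-i\pi/4}\partial_t^{1/2}u-\tfrac12 e^{i\pi/4}\,\partial_{x_1}^2\partial_t^{-1/2}u=0\ \text{ on }\overline{\Gamma_b}\cup\overline{\Gamma_t},$$ for $t\in(0,T]$. Then at each corner $c=\overline{\Gamma_a}\cap\overline{\Gamma_{a'}}$ (with $a\in\{l,r\}$, $a'\in\{b,t\}$) one has, for $t\in(0,T]$, $$\partial_{n_a}u(c,t)+\partial_{n_{a'}}u(c,t)+\tfrac{3}{2}e^{-i\pi/4}\,\partial_t^{1/2}u(c,t)=0,$$ where $\partial_{n_a}$ and $\partial_{n_{a'}}$ are the outward normal derivatives of the two edges meeting at $c$.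
   Context: Edges: $\Gamma_l=\{x_l\}\times(x_b,x_t)$, $\Gamma_r=\{x_r\}\times(x_b,x_t)$, $\Gamma_b=(x_l,x_r)\times\{x_b\}$, $\Gamma_t=(x_l,x_r)\times\{x_t\}$; $\partial_n$ is the outward normal derivative (so $\partial_n=\partial_{x_1}$ on $\Gamma_r$, $-\partial_{x_1}$ on $\Gamma_l$, $\partial_{x_2}$ on $\Gamma_t$, $-\partial_{x_2}$ on $\Gamma_b$), extended by continuity to the closed edges. Fractional operators in time (acting pointwise in $\mathbf{x}$): $\partial_t^{-1/2}f(t)=\frac{1}{\sqrt\pi}\int_0^t\frac{f(s)}{\sqrt{t-s}}\,ds$ and $\partial_t^{1/2}f=\frac{d}{dt}\,\partial_t^{-1/2}f$. *)

(* Defs.v *)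
From Stdlib Require Import Reals.
From Coquelicot Require Import Coquelicot.
Open Scope R_scope.

Definition cexpi (theta : R) : C := (cos theta, sin theta).

(* Derivative of f : R -> C at x, taken within the set S (one-sided at
   endpoints of closed intervals): the limit of (f(x+h)-f(x))/h as h -> 0
   with h <> 0 and x+h in S. *)
Definition is_deriv_on (S : R -> Prop) (f : R -> C) (x : R) (l : C) : Prop :=
  filterlim (fun h : R => Cmult (RtoC (/ h)) (Cminus (f (x + h)) (f x)))
    (within (fun h : R => h <> 0 /\ S (x + h)) (locally 0)) (locally l).

Definition is_deriv2_on (S : R -> Prop) (f : R -> C) (x : R) (l : C) : Prop :=
  exists g : R -> C, (forall y, S y -> is_deriv_on S f y (g y)) /\ is_deriv_on S g x l.

Definition Icc (a b : R) (y : R) : Prop := a <= y <= b.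
Definition Ioc (a b : R) (y : R) : Prop := a < y <= b.

Definition Cyl (xl xr xb xt T : R) (p : R * R * R) : Prop :=
  Icc xl xr (fst (fst p)) /\ Icc xb xt (snd (fst p)) /\ Icc 0 T (snd p).

Definition cont_on_cyl (xl xr xb xt T : R) (f : R -> R -> R -> C) : Prop :=
  forall p : R * R * R, Cyl xl xr xb xt T p ->
    filterlim (fun q : R * R * R => f (fst (fst q)) (snd (fst q)) (snd q))
      (within (Cyl xl xr xb xt T) (locally p))
      (locally (f (fst (fst p)) (snd (fst p)) (snd p))).

(* Riemann-Liouville half integral, as an improper integral singular at s = t:
   is_Ihalf f t v  <->  v = 1/sqrt(pi) * int_0^t f(s)/sqrt(t-s) ds. *)
Definition is_Ihalf (f : R -> C) (t : R) (v : C) : Prop :=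
  exists I : C,
    is_RInt_gen (V := C_R_NormedModule)
      (fun s : R => Cmult (RtoC (/ sqrt (t - s))) (f s)) (at_point 0) (at_left t) I
    /\ v = Cmult (RtoC (/ sqrt PI)) I.

(* Main.v *)
Require Import Defs.
From Stdlib Require Import Reals.
From Coquelicot Require Import Coquelicot.
From Stdlib Require Import Lra ClassicalEpsilon.
Open Scope R_scope.

Lemma norm_C (z : C) : @norm R_AbsRing C_R_NormedModule z = Cmod z.
Proof. now rewrite Cmod_norm. Qed.
Lemma minus_C (x y : C) : @minus C_R_NormedModule x y = Cminus x y.
Proof. reflexivity. Qed.
Lemma plus_C (x y : C) : @plus C_R_NormedModule x y = Cplus x y.
Proof. reflexivity. Qed.
Lemma opp_C (x : C) : @opp C_R_NormedModule x = Copp x.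
Proof. reflexivity. Qed.
Lemma scal_C (r : R) (z : C) : @scal R_Ring C_R_NormedModule r z = Cmult (RtoC r) z.
Proof. destruct z; unfold scal; simpl. unfold prod_scal, Cmult, RtoC; simpl.
  f_equal; unfold scal; simpl; unfold mult; simpl; ring. Qed.

Lemma ball_R (x e y : R) : Rabs (y - x) < e -> ball x e y.
Proof. intro H; exact H. Qed.
Lemma ball_R' (x e y : R) : ball x e y -> Rabs (y - x) < e.
Proof. intro H; exact H. Qed.

Lemma deriv_eps S f x l : is_deriv_on S f x l <->
  forall eps, 0 < eps -> exists d, 0 < d /\ forall h, h <> 0 -> Rabs h < d -> S (x+h) ->
    Cmod (Cminus (Cmult (RtoC (/h)) (Cminus (f (x + h)) (f x))) l) < eps.
Proof.
  unfold is_deriv_on. split.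
  - intros H eps Heps.
    destruct (proj1 (filterlim_locally_ball_norm (K:=R_AbsRing) (U:=C_R_NormedModule) _ _) H (mkposreal _ Heps)) as [d Hd].
    exists d; split; [apply cond_pos|]. intros h H0 Hh HS.
    specialize (Hd h). unfold ball_norm in Hd. rewrite norm_C in Hd.
    apply Hd; [apply ball_R; rewrite Rminus_0_r; exact Hh| split; auto].
  - intros H. apply (proj2 (filterlim_locally_ball_norm (K:=R_AbsRing) (U:=C_R_NormedModule) _ _)).
    intros eps. destruct (H eps (cond_pos eps)) as [d [Hd Hd']].
    exists (mkposreal _ Hd). intros h Hb [H0 HS]. unfold ball_norm. rewrite norm_C.
    apply Hd'; auto. apply ball_R' in Hb. rewrite Rminus_0_r in Hb. exact Hb.
Qed.

Lemma Cmod_small (z : C) : (forall eps, 0 < eps -> Cmod z < eps) -> z = RtoC 0.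
Proof.
  intro H. apply Cmod_eq_0. destruct (Cmod_ge_0 z) as [Hp|He]; [|auto].
  specialize (H _ Hp). lra.
Qed.

Lemma Cmod_sub_tri (a b c : C) : Cmod (Cminus a c) <= Cmod (Cminus a b) + Cmod (Cminus b c).
Proof.
  replace (Cminus a c) with (Cplus (Cminus a b) (Cminus b c)) by ring. apply Cmod_triangle.
Qed.

Lemma Cmod_sym (a b : C) : Cmod (Cminus a b) = Cmod (Cminus b a).
Proof. replace (Cminus a b) with (Copp (Cminus b a)) by ring. apply Cmod_opp. Qed.

Lemma deriv_unique S f x l1 l2 : is_deriv_on S f x l1 -> is_deriv_on S f x l2 ->
  (forall d, 0 < d -> exists h, h <> 0 /\ Rabs h < d /\ S (x+h)) -> l1 = l2.
Proof.
  intros H1 H2 HS. rewrite deriv_eps in H1, H2.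
  assert (Cminus l1 l2 = RtoC 0) as E.
  { apply Cmod_small. intros eps He.
    destruct (H1 (eps/2)) as [d1 [Hd1 H1']]; [lra|].
    destruct (H2 (eps/2)) as [d2 [Hd2 H2']]; [lra|].
    destruct (HS (Rmin d1 d2)) as [h [Hh0 [Hh HSh]]]; [apply Rmin_pos; auto|].
    assert (Rabs h < d1) by (eapply Rlt_le_trans; [exact Hh| apply Rmin_l]).
    assert (Rabs h < d2) by (eapply Rlt_le_trans; [exact Hh| apply Rmin_r]).
    specialize (H1' h Hh0 H HSh). specialize (H2' h Hh0 H0 HSh).
    eapply Rle_lt_trans; [apply (Cmod_sub_tri _ (Cmult (RtoC (/ h)) (Cminus (f (x + h)) (f x))))|].
    rewrite Cmod_sym. lra. }
  replace l1 with (Cplus (Cminus l1 l2) l2) by ring. rewrite E. ring.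
Qed.

Lemma deriv_ext S f g x l : (forall y, S y -> f y = g y) -> S x ->
  is_deriv_on S f x l -> is_deriv_on S g x l.
Proof.
  intros E Sx H. rewrite deriv_eps in *. intros eps He. destruct (H eps He) as [d [Hd H']].
  exists d; split; auto. intros h H0 Hh Sh. rewrite <- !E; auto.
Qed.

Lemma deriv_sub (S S' : R -> Prop) f x l : (forall y, S' y -> S y) ->
  is_deriv_on S f x l -> is_deriv_on S' f x l.
Proof.
  intros E H. rewrite deriv_eps in *. intros eps He. destruct (H eps He) as [d [Hd H']].
  exists d; split; auto.
Qed.

Definition clampR (a b x : R) := Rmax a (Rmin b x).

Lemma clampR_in a b x : a <= b -> a <= clampR a b x <= b.
Proof. intros; unfold clampR, Rmax, Rmin; repeat destruct Rle_dec; lra. Qed.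
Lemma clampR_id a b x : a <= x <= b -> clampR a b x = x.
Proof. intros; unfold clampR, Rmax, Rmin; repeat destruct Rle_dec; lra. Qed.
Lemma clampR_lip a b x y : a <= b -> Rabs (clampR a b x - clampR a b y) <= Rabs (x - y).
Proof. intros; unfold clampR, Rmax, Rmin; repeat destruct Rle_dec;
  unfold Rabs; repeat destruct Rcase_abs; lra. Qed.

Lemma mvi_R (phi dphi : R -> R) (S : R -> Prop) a b eps : a <= b ->
  (forall x, a <= x <= b -> S x) ->
  (forall x, a <= x <= b -> forall e, 0 < e -> exists d, 0 < d /\ forall h, h <> 0 -> Rabs h < d ->
      S (x + h) -> Rabs ((phi (x+h) - phi x) / h - dphi x) < e) ->
  (forall x, a <= x <= b -> Rabs (dphi x) <= eps) ->
  Rabs (phi b - phi a) <= eps * (b - a).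
Proof.
  intros Hab HS Hd Hb. destruct Hab as [Hab|Hab]; [|subst; rewrite !Rminus_diag, Rabs_R0; lra].
  set (psi := fun x => phi (clampR a b x)).
  destruct (MVT_gen psi a b dphi) as [c [Hc E]].
  - rewrite Rmin_left, Rmax_right by lra. intros x Hx.
    apply is_derive_Reals. intros e He.
    destruct (Hd x ltac:(lra) e He) as [d [Hd0 Hd']].
    assert (0 < Rmin d (Rmin (x - a) (b - x))) as Hp by (repeat apply Rmin_pos; lra).
    exists (mkposreal _ Hp). intros h Hh0 Hh. simpl in Hh.
    assert (Rabs h < d) by (eapply Rlt_le_trans; [exact Hh|apply Rmin_l]).
    assert (Rabs h < Rmin (x - a) (b - x)) by (eapply Rlt_le_trans; [exact Hh|apply Rmin_r]).
    assert (Rabs h < x - a) by (eapply Rlt_le_trans; [exact H0|apply Rmin_l]).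
    assert (Rabs h < b - x) by (eapply Rlt_le_trans; [exact H0|apply Rmin_r]).
    assert (a <= x + h <= b) by (unfold Rabs in *; destruct Rcase_abs; lra).
    unfold psi. rewrite !clampR_id by lra. apply Hd'; auto.
  - rewrite Rmin_left, Rmax_right by lra. intros x Hx.
    destruct (Hd x Hx 1 Rlt_0_1) as [d [Hd0 Hd']].
    intros e He. set (M := Rabs (dphi x) + 1).
    assert (0 < M) by (unfold M; pose proof (Rabs_pos (dphi x)); lra).
    exists (Rmin d (e / M)). split; [apply Rmin_pos; auto; apply Rdiv_lt_0_compat; auto|].
    intros y [_ Hy]. unfold dist in Hy; simpl in Hy; unfold R_dist in Hy.
    unfold dist; simpl; unfold R_dist. unfold psi.
    rewrite (clampR_id a b x) by lra.
    pose proof (clampR_lip a b y x ltac:(lra)) as L. rewrite (clampR_id a b x) in L by lra.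
    pose proof (clampR_in a b y ltac:(lra)) as Iy.
    set (z := clampR a b y) in *.
    destruct (Req_dec z x) as [Ez|Ez]; [rewrite Ez, Rminus_diag, Rabs_R0; auto|].
    assert (Rabs (z - x) < d) by (eapply Rle_lt_trans; [exact L|]; eapply Rlt_le_trans; [exact Hy|apply Rmin_l]).
    assert (Rabs (z - x) < e / M) by (eapply Rle_lt_trans; [exact L|]; eapply Rlt_le_trans; [exact Hy|apply Rmin_r]).
    assert (z - x <> 0) by lra.
    specialize (Hd' (z - x) H2 H0). replace (x + (z - x)) with z in Hd' by ring.
    specialize (Hd' (HS z Iy)).
    replace (phi z - phi x) with (((phi z - phi x) / (z - x) - dphi x) * (z - x) + dphi x * (z - x)) by (field; auto).
    eapply Rle_lt_trans; [apply Rabs_triang|]. rewrite !Rabs_mult.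
    apply Rlt_le_trans with (1 * Rabs (z - x) + Rabs (dphi x) * Rabs (z - x)).
    + apply Rplus_lt_le_compat; [|lra]. apply Rmult_lt_compat_r; [apply Rabs_pos_lt; auto|auto].
    + replace (1 * Rabs (z - x) + Rabs (dphi x) * Rabs (z - x)) with (M * Rabs (z - x)) by (unfold M; ring).
      apply Rle_trans with (M * (e / M)); [apply Rmult_le_compat_l; lra|]. right; field; lra.
  - rewrite Rmin_left, Rmax_right in Hc by lra.
    unfold psi in E. rewrite !clampR_id in E by lra. rewrite E, Rabs_mult, (Rabs_right (b - a)) by lra.
    apply Rmult_le_compat_r; [lra|]. apply Hb; auto.
Qed.

Lemma Cmod_le_ReIm (z : C) : Cmod z <= Rabs (fst z) + Rabs (snd z).
Proof.
  destruct z as [a b]; unfold Cmod; simpl.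
  pose proof (Rabs_pos a); pose proof (Rabs_pos b).
  rewrite <- (sqrt_square (Rabs a + Rabs b)) by lra. apply sqrt_le_1_alt.
  assert (a * a = Rabs a * Rabs a) by (rewrite <- Rabs_mult, Rabs_right; nra).
  assert (b * b = Rabs b * Rabs b) by (rewrite <- Rabs_mult, Rabs_right; nra).
  nra.
Qed.

Lemma im_le_Cmod (c : C) : Rabs (Im c) <= Cmod c.
Proof. eapply Rle_trans; [|apply Rmax_Cmod]. apply Rmax_r. Qed.

Lemma mvi_C (f df : R -> C) (S : R -> Prop) a b (L : C) eps : a <= b ->
  (forall x, a <= x <= b -> S x) ->
  (forall x, a <= x <= b -> is_deriv_on S f x (df x)) ->
  (forall x, a <= x <= b -> Cmod (Cminus (df x) L) <= eps) ->
  Cmod (Cminus (Cminus (f b) (f a)) (Cmult (RtoC (b - a)) L)) <= 2 * eps * (b - a).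
Proof.
  intros Hab HS Hd Hb.
  assert (K1 : Rabs (fst (f b) - fst L * b - (fst (f a) - fst L * a)) <= eps * (b - a)).
  { apply (mvi_R (fun x => fst (f x) - fst L * x) (fun x => fst (df x) - fst L) S); auto.
    - intros x Hx e He. pose proof (proj1 (deriv_eps _ _ _ _) (Hd x Hx) e He) as [d [Hd0 Hd']].
      exists d; split; auto. intros h H0 Hh Sh. specialize (Hd' h H0 Hh Sh).
      eapply Rle_lt_trans; [|exact Hd']. eapply Rle_trans; [|apply re_le_Cmod].
      right. f_equal. unfold Re; simpl. field. auto.
    - intros x Hx. replace (fst (df x) - fst L) with (Re (Cminus (df x) L)) by (simpl; ring).
      eapply Rle_trans; [apply re_le_Cmod|]. apply Hb; auto. }
  assert (K2 : Rabs (snd (f b) - snd L * b - (snd (f a) - snd L * a)) <= eps * (b - a)).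
  { apply (mvi_R (fun x => snd (f x) - snd L * x) (fun x => snd (df x) - snd L) S); auto.
    - intros x Hx e He. pose proof (proj1 (deriv_eps _ _ _ _) (Hd x Hx) e He) as [d [Hd0 Hd']].
      exists d; split; auto. intros h H0 Hh Sh. specialize (Hd' h H0 Hh Sh).
      eapply Rle_lt_trans; [|exact Hd']. eapply Rle_trans; [|apply im_le_Cmod].
      right. f_equal. unfold Im; simpl. field. auto.
    - intros x Hx. replace (snd (df x) - snd L) with (Im (Cminus (df x) L)) by (simpl; ring).
      eapply Rle_trans; [apply im_le_Cmod|]. apply Hb; auto. }
  eapply Rle_trans; [apply Cmod_le_ReIm|]. simpl.
  replace (fst (f b) + - fst (f a) + - ((b - a) * fst L - 0 * snd L)) with
    (fst (f b) - fst L * b - (fst (f a) - fst L * a)) by ring.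
  replace (snd (f b) + - snd (f a) + - ((b - a) * snd L + 0 * fst L)) with
    (snd (f b) - snd L * b - (snd (f a) - snd L * a)) by ring.
  lra.
Qed.


Lemma unif_1d (F : R -> R -> C) (S : R -> Prop) y0 a b : S y0 ->
  (forall t0, a <= t0 <= b -> forall e, 0 < e -> exists d, 0 < d /\ forall z t, S z -> a <= t <= b ->
     Rabs (z - y0) < d -> Rabs (t - t0) < d -> Cmod (Cminus (F z t) (F y0 t0)) < e) ->
  forall e, 0 < e -> exists d, 0 < d /\ forall z t, S z -> a <= t <= b -> Rabs (z - y0) < d ->
     Cmod (Cminus (F z t) (F y0 t)) < e.
Proof.
  intros Sy0 H e He.
  assert (X : forall t0, exists d : posreal, a <= t0 <= b -> forall z t, S z -> a <= t <= b ->
     Rabs (z - y0) < d -> Rabs (t - t0) < d -> Cmod (Cminus (F z t) (F y0 t0)) < e / 2).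
  { intros t0. destruct (Rle_dec a t0) as [h1|h1]; [destruct (Rle_dec t0 b) as [h2|h2]|].
    - destruct (H t0 (conj h1 h2) (e/2)) as [d [Hd Hd']]; [lra|]. exists (mkposreal _ Hd). intros _. exact Hd'.
    - exists (mkposreal 1 Rlt_0_1). intros; lra.
    - exists (mkposreal 1 Rlt_0_1). intros; lra. }
  set (delta := fun t0 => proj1_sig (constructive_indefinite_description _ (X t0))).
  assert (Hdel : forall t0, a <= t0 <= b -> forall z t, S z -> a <= t <= b ->
     Rabs (z - y0) < delta t0 -> Rabs (t - t0) < delta t0 -> Cmod (Cminus (F z t) (F y0 t0)) < e / 2).
  { intros t0. unfold delta. destruct (constructive_indefinite_description _ (X t0)) as [d Hd]. exact Hd. }
  destruct (compactness_value_1d a b delta) as [d Hd].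
  exists d; split; [apply cond_pos|]. intros z t Sz Ht Hz.
  destruct (Rlt_dec (Cmod (Cminus (F z t) (F y0 t))) e) as [ok|nok]; [exact ok|exfalso].
  apply (Hd t Ht). intros [t0 [Ht0 [H1 H2]]]. apply nok.
  eapply Rle_lt_trans; [apply (Cmod_sub_tri _ (F y0 t0))|].
  assert (Cmod (Cminus (F z t) (F y0 t0)) < e/2) by (apply Hdel; auto; lra).
  assert (Cmod (Cminus (F y0 t) (F y0 t0)) < e/2).
  { apply Hdel; auto. rewrite Rminus_diag, Rabs_R0. apply cond_pos. }
  rewrite (Cmod_sym (F y0 t0)). lra.
Qed.

Lemma cyl_eps xl xr xb xt T f : cont_on_cyl xl xr xb xt T f ->
  forall x1 x2 t, Cyl xl xr xb xt T (x1, x2, t) ->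
  forall e, 0 < e -> exists d, 0 < d /\ forall y1 y2 s, Cyl xl xr xb xt T (y1, y2, s) ->
    Rabs (y1 - x1) < d -> Rabs (y2 - x2) < d -> Rabs (s - t) < d ->
    Cmod (Cminus (f y1 y2 s) (f x1 x2 t)) < e.
Proof.
  intros H x1 x2 t Hc e He. specialize (H _ Hc).
  destruct (proj1 (filterlim_locally_ball_norm (K:=R_AbsRing) (U:=C_R_NormedModule) _ _) H (mkposreal _ He)) as [d Hd].
  exists d; split; [apply cond_pos|]. intros y1 y2 s Hcy H1 H2 H3.
  specialize (Hd (y1, y2, s)). unfold ball_norm in Hd. rewrite norm_C in Hd. apply Hd; auto.
  split; [split|]; apply ball_R; auto.
Qed.

Definition CInt (f : R -> C) (a b : R) : C := @RInt C_R_CompleteNormedModule f a b.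
Definition CexInt (f : R -> C) (a b : R) : Prop := @ex_RInt C_R_NormedModule f a b.

Lemma CexInt_minus f g a b : CexInt f a b -> CexInt g a b -> CexInt (fun r => Cminus (f r) (g r)) a b.
Proof. intros. apply (ex_RInt_minus (V:=C_R_NormedModule) f g); auto. Qed.
Lemma CexInt_plus f g a b : CexInt f a b -> CexInt g a b -> CexInt (fun r => Cplus (f r) (g r)) a b.
Proof. intros. apply (ex_RInt_plus (V:=C_R_NormedModule) f g); auto. Qed.
Lemma CexInt_scal f c a b : CexInt f a b -> CexInt (fun r => Cmult (RtoC c) (f r)) a b.
Proof. intros. eapply ex_RInt_ext; [|apply (ex_RInt_scal (V:=C_R_NormedModule) f a b c H)].
  intros; simpl; rewrite scal_C; auto. Qed.
Lemma CInt_minus f g a b : CexInt f a b -> CexInt g a b ->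
  CInt (fun r => Cminus (f r) (g r)) a b = Cminus (CInt f a b) (CInt g a b).
Proof. intros. unfold CInt. apply (RInt_minus (V:=C_R_CompleteNormedModule) f g); auto. Qed.
Lemma CInt_plus f g a b : CexInt f a b -> CexInt g a b ->
  CInt (fun r => Cplus (f r) (g r)) a b = Cplus (CInt f a b) (CInt g a b).
Proof. intros. unfold CInt. apply (RInt_plus (V:=C_R_CompleteNormedModule) f g); auto. Qed.
Lemma CInt_scal f c a b : CexInt f a b ->
  CInt (fun r => Cmult (RtoC c) (f r)) a b = Cmult (RtoC c) (CInt f a b).
Proof. intros. unfold CInt.
  etransitivity; [|exact (scal_C c (@RInt C_R_CompleteNormedModule f a b))].
  etransitivity; [|exact (RInt_scal (V:=C_R_CompleteNormedModule) f a b c H)].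
  apply (@RInt_ext C_R_CompleteNormedModule). intros; rewrite scal_C; auto. Qed.
Lemma CInt_ext f g a b : (forall x, Rmin a b < x < Rmax a b -> f x = g x) -> CInt f a b = CInt g a b.
Proof. intros. unfold CInt. apply (@RInt_ext C_R_CompleteNormedModule); auto. Qed.
Lemma CexInt_ext f g a b : (forall x, Rmin a b < x < Rmax a b -> f x = g x) -> CexInt f a b -> CexInt g a b.
Proof. intros. eapply ex_RInt_ext; eauto. Qed.

Lemma CInt_norm f a b M : a <= b -> CexInt f a b -> (forall x, a <= x <= b -> Cmod (f x) <= M) ->
  Cmod (CInt f a b) <= M * (b - a).
Proof.
  intros Hab Hf HM. rewrite <- norm_C.
  eapply (norm_RInt_le (V:=C_R_NormedModule) f (fun _ => M) a b); auto.
  - intros; rewrite norm_C; auto.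
  - apply (RInt_correct (V:=C_R_CompleteNormedModule)). exact Hf.
  - replace (M * (b - a)) with (scal (b - a) M) by (unfold scal; simpl; unfold mult; simpl; ring).
    apply (is_RInt_const (V:=R_NormedModule)).
Qed.

Lemma param_deriv (F F' : R -> R -> C) (S : R -> Prop) y :
  (forall z, S z -> CexInt (F z) 0 1) -> CexInt (F' y) 0 1 -> S y ->
  (forall e, 0 < e -> exists d, 0 < d /\ forall h, h <> 0 -> Rabs h < d -> S (y + h) ->
     forall r, 0 <= r <= 1 ->
     Cmod (Cminus (Cminus (F (y+h) r) (F y r)) (Cmult (RtoC h) (F' y r))) <= e * Rabs h) ->
  is_deriv_on S (fun z => CInt (F z) 0 1) y (CInt (F' y) 0 1).
Proof.
  intros HF HF' Sy UD. apply deriv_eps. intros e He.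
  destruct (UD (e/2)) as [d [Hd Hd']]; [lra|]. exists d; split; auto.
  intros h H0 Hh Sh.
  rewrite <- (CInt_minus (F (y+h)) (F y)) by auto.
  rewrite <- (CInt_scal _ (/h)) by (apply CexInt_minus; auto).
  rewrite <- (CInt_minus (fun r => Cmult (RtoC (/ h)) (Cminus (F (y + h) r) (F y r))) (F' y))
     by (first [exact HF' | apply CexInt_scal, CexInt_minus; apply HF; assumption]).
  eapply Rle_lt_trans; [apply (CInt_norm _ 0 1 (e/2)); [lra| |]|lra].
  - apply CexInt_minus; [|exact HF']. apply CexInt_scal, CexInt_minus; apply HF; assumption.
  - intros r Hr. specialize (Hd' h H0 Hh Sh r Hr).
    replace (Cminus (Cmult (RtoC (/ h)) (Cminus (F (y + h) r) (F y r))) (F' y r)) with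
      (Cmult (RtoC (/ h)) (Cminus (Cminus (F (y+h) r) (F y r)) (Cmult (RtoC h) (F' y r)))).
    + rewrite Cmod_mult, Cmod_R. rewrite Rabs_inv.
      apply Rle_trans with (/ Rabs h * (e / 2 * Rabs h)).
      * apply Rmult_le_compat_l; auto. left; apply Rinv_0_lt_compat, Rabs_pos_lt; auto.
      * right; field. apply Rabs_no_R0; auto.
    + apply injective_projections; simpl; field; auto.
Qed.

Lemma contC_eps (F : R -> C) x :
  (forall e, 0 < e -> exists d, 0 < d /\ forall y, Rabs (y - x) < d -> Cmod (Cminus (F y) (F x)) < e) ->
  continuous F x.
Proof.
  intros H. apply (proj2 (filterlim_locally_ball_norm (K:=R_AbsRing) (U:=C_R_NormedModule) _ _)).
  intros eps. destruct (H eps (cond_pos eps)) as [d [Hd Hd']]. exists (mkposreal _ Hd).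
  intros y Hy. unfold ball_norm. rewrite norm_C. apply Hd'. apply ball_R'. exact Hy.
Qed.

Lemma cont_epsC (F : R -> C) x : continuous F x ->
  forall e, 0 < e -> exists d, 0 < d /\ forall y, Rabs (y - x) < d -> Cmod (Cminus (F y) (F x)) < e.
Proof.
  intros H e He.
  destruct (proj1 (filterlim_locally_ball_norm (K:=R_AbsRing) (U:=C_R_NormedModule) _ _) H (mkposreal _ He)) as [d Hd].
  exists d; split; [apply cond_pos|]. intros y Hy. specialize (Hd y (ball_R _ _ _ Hy)).
  unfold ball_norm in Hd. rewrite norm_C in Hd. exact Hd.
Qed.

Lemma clamp_cont (v : R -> C) T : 0 <= T ->
  (forall s, 0 <= s <= T -> forall e, 0 < e -> exists d, 0 < d /\ forall s', 0 <= s' <= T ->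
      Rabs (s' - s) < d -> Cmod (Cminus (v s') (v s)) < e) ->
  forall x, continuous (fun s => v (clampR 0 T s)) x.
Proof.
  intros HT H x. apply contC_eps. intros e He.
  destruct (H (clampR 0 T x) (clampR_in 0 T x HT) e He) as [d [Hd Hd']].
  exists d; split; auto. intros y Hy. apply Hd'; [apply clampR_in; auto|].
  eapply Rle_lt_trans; [apply clampR_lip; auto|exact Hy].
Qed.

Lemma CexInt_cont (F : R -> C) a b : (forall x, continuous F x) -> CexInt F a b.
Proof. intros H. apply (ex_RInt_continuous (V:=C_R_CompleteNormedModule)). intros; apply H. Qed.

Lemma CInt_lower_cont (F : R -> C) b : (forall x, continuous F x) ->
  forall e, 0 < e -> exists d, 0 < d /\ forall z, Rabs z < d ->
     Cmod (Cminus (CInt F z b) (CInt F 0 b)) < e.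
Proof.
  intros HF. 
  assert (continuous (fun z => CInt F z b) 0).
  { apply (continuous_RInt_2 (V:=C_R_NormedModule) F 0 b). exists (mkposreal 1 Rlt_0_1).
    intros z _. apply (RInt_correct (V:=C_R_CompleteNormedModule)). apply CexInt_cont; auto. }
  intros e He. destruct (cont_epsC _ _ H e He) as [d [Hd Hd']]. exists d; split; auto.
  intros z Hz. apply Hd'. rewrite Rminus_0_r; auto.
Qed.


Lemma subst_half (vt : R -> C) t b y : 0 < b < t -> (forall x, continuous vt x) ->
  @is_RInt C_R_NormedModule (fun s => Cmult (RtoC (/ sqrt (t - s))) (vt s)) 0 b y ->
  y = Cmult (RtoC (2 * sqrt t)) (CInt (fun r => vt (t * (1 - r * r))) (sqrt (1 - b / t)) 1).
Proof.
  intros Hb Hv Hy.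
  set (rb := sqrt (1 - b / t)).
  assert (Hq : 0 < 1 - b / t < 1).
  { split; [|assert (0 < b / t) by (apply Rdiv_lt_0_compat; lra); lra].
    assert (b / t < 1). { unfold Rdiv. apply (Rmult_lt_reg_r t); [lra|]. rewrite Rmult_assoc, Rinv_l, Rmult_1_r, Rmult_1_l; lra. } lra. }
  assert (Hrb : 0 < rb < 1).
  { unfold rb. split; [apply sqrt_lt_R0; lra|]. apply Rlt_le_trans with (sqrt 1); [apply sqrt_lt_1_alt; lra| rewrite sqrt_1; lra]. }
  assert (Hrb2 : rb * rb = 1 - b / t) by (unfold rb; apply sqrt_sqrt; lra).
  set (fh := fun s => Cmult (RtoC (/ sqrt (t - s))) (vt s)).
  assert (Hfc : forall s, s < t -> continuous fh s).
  { intros s Hs. 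
    apply (continuous_ext (fun s => @scal R_AbsRing C_R_NormedModule (/ sqrt (t - s)) (vt s))).
    { intros; apply scal_C. }
    apply (continuous_scal (V:=C_R_NormedModule) (fun s => / sqrt (t - s)) vt); [|apply Hv].
    apply continuous_Rinv_comp.
    - apply continuous_sqrt_comp. apply (ex_derive_continuous (K:=R_AbsRing) (V:=R_NormedModule)). auto_derive. auto.
    - apply Rgt_not_eq, sqrt_lt_R0. lra. }
  pose proof (is_RInt_comp (V:=C_R_CompleteNormedModule) fh (fun r => t * (1 - r * r)) (fun r => - 2 * t * r) rb 1) as Hc.
  rewrite Rmin_left, Rmax_right in Hc by lra.
  assert (E1 : t * (1 - rb * rb) = b) by (rewrite Hrb2; field; lra).
  assert (E2 : t * (1 - 1 * 1) = 0) by ring.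
  assert (Hc1 : forall x, rb <= x <= 1 -> continuous fh (t * (1 - x * x))).
  { intros x Hx. apply Hfc. assert (0 < x) by lra. assert (0 < t * (x * x)) by (apply Rmult_lt_0_compat; nra). nra. }
  specialize (Hc Hc1).
  assert (Hc2 : forall x, rb <= x <= 1 -> is_derive (fun r => t * (1 - r * r)) x (- 2 * t * x) /\ continuous (fun r => - 2 * t * r) x).
  { intros x _. split.
    - auto_derive; auto. ring.
    - apply (ex_derive_continuous (K:=R_AbsRing) (V:=R_NormedModule)). auto_derive. auto. }
  specialize (Hc Hc2). rewrite E1, E2 in Hc.
  assert (Hyb : @RInt C_R_CompleteNormedModule fh b 0 = opp y).
  { apply is_RInt_unique. apply (is_RInt_swap (V:=C_R_NormedModule)). exact Hy. }
  rewrite Hyb in Hc.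
  assert (Hc3 : @is_RInt C_R_NormedModule (fun r => Cmult (RtoC (- 2 * sqrt t)) (vt (t * (1 - r * r)))) rb 1 (opp y)).
  { eapply is_RInt_ext; [|exact Hc]. intros r Hr. rewrite Rmin_left, Rmax_right in Hr by lra.
    cbv beta. rewrite scal_C. unfold fh.
    assert (Es : sqrt (t - t * (1 - r * r)) = sqrt t * r).
    { replace (t - t * (1 - r * r)) with (t * (r * r)) by ring. rewrite sqrt_mult by nra.
      rewrite sqrt_square by lra. auto. }
    rewrite Es.
    assert (0 < sqrt t) by (apply sqrt_lt_R0; lra).
    assert (Et : t = sqrt t * sqrt t) by (rewrite sqrt_sqrt; lra).
    apply injective_projections; simpl; rewrite Et at 1; field; lra. }
  pose proof (is_RInt_unique (V:=C_R_CompleteNormedModule) _ _ _ _ Hc3) as Hc4. clear Hc3. rename Hc4 into Hc3.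
  fold (CInt (fun r => Cmult (RtoC (- 2 * sqrt t)) (vt (t * (1 - r * r)))) rb 1) in Hc3.
  rewrite CInt_scal in Hc3.
  2:{ apply CexInt_cont. intros x. apply (continuous_comp (fun r => t * (1 - r * r)) vt); [|apply Hv].
      apply (ex_derive_continuous (K:=R_AbsRing) (V:=R_NormedModule)). auto_derive. auto. }
  replace y with (opp (opp y)) by (apply opp_opp). rewrite <- Hc3.
  rewrite opp_C. apply injective_projections; simpl; ring.
Qed.

Lemma rep_half (v : R -> C) T t w : 0 < t <= T ->
  (forall s, 0 <= s <= T -> forall e, 0 < e -> exists d, 0 < d /\ forall s', 0 <= s' <= T ->
      Rabs (s' - s) < d -> Cmod (Cminus (v s') (v s)) < e) ->
  is_Ihalf v t w ->
  w = Cmult (RtoC (2 * sqrt t / sqrt PI)) (CInt (fun r => v (clampR 0 T (t * (1 - r * r)))) 0 1).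
Proof.
  intros Ht Hv [I [HI Hw]]. subst w.
  set (vt := fun s => v (clampR 0 T s)).
  assert (Hvt : forall x, continuous vt x) by (apply clamp_cont; auto; lra).
  set (P := fun r => vt (t * (1 - r * r))).
  assert (HP : forall x, continuous P x).
  { intros x. apply (continuous_comp (fun r => t * (1 - r * r)) vt); [|apply Hvt].
    apply (ex_derive_continuous (K:=R_AbsRing) (V:=R_NormedModule)). auto_derive. auto. }
  assert (Hst : 0 < sqrt t) by (apply sqrt_lt_R0; lra).
  set (K := 2 * sqrt t).
  assert (HK : 0 < K) by (unfold K; lra).
  assert (EI : I = Cmult (RtoC K) (CInt P 0 1)).
  { assert (Cminus I (Cmult (RtoC K) (CInt P 0 1)) = RtoC 0).
    2:{ replace I with (Cplus (Cminus I (Cmult (RtoC K) (CInt P 0 1))) (Cmult (RtoC K) (CInt P 0 1))) by ring.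
        rewrite H. ring. }
    apply Cmod_small. intros e He.
    unfold is_RInt_gen, filterlimi, filter_le in HI.
    assert (He2 : 0 < e / 2) by lra.
    pose proof (HI _ (locally_ball_norm (V:=C_R_NormedModule) I (mkposreal (e/2) He2))) as H1.
    destruct H1 as [Q R0 HQ HR HPr].
    unfold at_point in HQ. unfold at_left, within in HR. destruct HR as [dl Hdl].
    assert (He3 : 0 < e / (2 * K)) by (apply Rdiv_lt_0_compat; lra).
    destruct (CInt_lower_cont P 1 HP _ He3) as [d2 [Hd2 Hd2']].
    set (eta := Rmin dl (Rmin (t * (d2 * d2)) t) / 2).
    assert (Hm : 0 < Rmin dl (Rmin (t * (d2 * d2)) t)).
    { repeat apply Rmin_pos; try apply cond_pos; try lra. apply Rmult_lt_0_compat; nra. }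
    assert (Heta : 0 < eta /\ eta < dl /\ eta < t * (d2 * d2) /\ eta < t).
    { unfold eta. pose proof (Rmin_l dl (Rmin (t * (d2 * d2)) t)).
      pose proof (Rmin_r dl (Rmin (t * (d2 * d2)) t)).
      pose proof (Rmin_l (t * (d2 * d2)) t). pose proof (Rmin_r (t * (d2 * d2)) t). lra. }
    set (b := t - eta).
    assert (Rb : R0 b).
    { apply Hdl; [|unfold b; lra]. apply ball_R. unfold b. replace (t - eta - t) with (- eta) by ring.
      rewrite Rabs_Ropp, Rabs_right by lra. lra. }
    destruct (HPr 0 b HQ Rb) as [y [Hy Hby]]. simpl in Hy.
    assert (Hy' : @is_RInt C_R_NormedModule (fun s => Cmult (RtoC (/ sqrt (t - s))) (vt s)) 0 b y).
    { eapply is_RInt_ext; [|exact Hy]. intros s Hs. rewrite Rmin_left, Rmax_right in Hs by (unfold b; lra).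
      unfold vt. rewrite clampR_id; auto. unfold b in Hs; lra. }
    apply subst_half in Hy'; [|unfold b; lra|exact Hvt].
    assert (Hrb : Rabs (sqrt (1 - b / t)) < d2).
    { rewrite Rabs_right by (apply Rle_ge, sqrt_pos).
      replace (1 - b / t) with (eta / t) by (unfold b; field; lra).
      rewrite <- (sqrt_square d2) by lra. apply sqrt_lt_1_alt. split.
      - apply Rlt_le, Rdiv_lt_0_compat; lra.
      - unfold Rdiv. apply (Rmult_lt_reg_r t); [lra|]. rewrite Rmult_assoc, Rinv_l, Rmult_1_r by lra. lra. }
    specialize (Hd2' _ Hrb).
    unfold ball_norm in Hby. rewrite norm_C, minus_C in Hby.
    eapply Rle_lt_trans; [apply (Cmod_sub_tri _ y)|].
    rewrite Cmod_sym.
    replace (Cminus y (Cmult (RtoC K) (CInt P 0 1))) with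
      (Cmult (RtoC K) (Cminus (CInt P (sqrt (1 - b / t)) 1) (CInt P 0 1))) by (rewrite Hy'; fold K; unfold P; ring).
    rewrite Cmod_mult, Cmod_R, Rabs_right by lra.
    apply Rlt_le_trans with (e / 2 + K * (e / (2 * K))); [|right; field; lra].
    simpl in Hby. apply Rplus_lt_compat; [exact Hby|]. apply Rmult_lt_compat_l; auto. }
  rewrite EI. unfold K.
  assert (0 < sqrt PI) by (apply sqrt_lt_R0, PI_RGT_0).
  unfold P, vt. generalize (CInt (fun r => v (clampR 0 T (t * (1 - r * r)))) 0 1). intro z.
  apply injective_projections; simpl; field; lra.
Qed.


Lemma mvi_sym (f df : R -> C) (S : R -> Prop) y h L eps :
  (forall x, Rmin y (y+h) <= x <= Rmax y (y+h) -> S x) ->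
  (forall x, Rmin y (y+h) <= x <= Rmax y (y+h) -> is_deriv_on S f x (df x)) ->
  (forall x, Rmin y (y+h) <= x <= Rmax y (y+h) -> Cmod (Cminus (df x) L) <= eps) ->
  Cmod (Cminus (Cminus (f (y+h)) (f y)) (Cmult (RtoC h) L)) <= 2 * eps * Rabs h.
Proof.
  intros HS Hd Hb. destruct (Rle_dec 0 h) as [Hh|Hh].
  - rewrite Rmin_left, Rmax_right in * by lra. rewrite Rabs_right by lra.
    pose proof (mvi_C f df S y (y+h) L eps ltac:(lra) HS Hd Hb) as M.
    replace (y + h - y) with h in M by ring. exact M.
  - rewrite Rmin_right, Rmax_left in * by lra. rewrite Rabs_left by lra.
    pose proof (mvi_C f df S (y+h) y L eps ltac:(lra) HS Hd Hb) as M.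
    replace (y - (y + h)) with (- h) in M by ring.
    replace (Cminus (Cminus (f (y + h)) (f y)) (Cmult (RtoC h) L)) with
      (Copp (Cminus (Cminus (f y) (f (y + h))) (Cmult (RtoC (- h)) L))).
    + rewrite Cmod_opp. exact M.
    + apply injective_projections; simpl; ring.
Qed.

Lemma deriv_scal S f x l c : is_deriv_on S f x l ->
  is_deriv_on S (fun z => Cmult (RtoC c) (f z)) x (Cmult (RtoC c) l).
Proof.
  intros H. rewrite deriv_eps in *. intros e He.
  destruct (H (e / (Rabs c + 1))) as [d [Hd Hd']].
  { apply Rdiv_lt_0_compat; auto. pose proof (Rabs_pos c); lra. }
  exists d; split; auto. intros h H0 Hh Sh. specialize (Hd' h H0 Hh Sh).
  replace (Cminus (Cmult (RtoC (/ h)) (Cminus (Cmult (RtoC c) (f (x + h))) (Cmult (RtoC c) (f x)))) (Cmult (RtoC c) l))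
    with (Cmult (RtoC c) (Cminus (Cmult (RtoC (/ h)) (Cminus (f (x + h)) (f x))) l)) by ring.
  rewrite Cmod_mult, Cmod_R. pose proof (Rabs_pos c).
  apply Rle_lt_trans with (Rabs c * (e / (Rabs c + 1))).
  - apply Rmult_le_compat_l; lra.
  - apply Rlt_le_trans with ((Rabs c + 1) * (e / (Rabs c + 1))); [|right; field; lra].
    apply Rmult_lt_compat_r; [apply Rdiv_lt_0_compat; lra|lra].
Qed.

Definition jcont (S : R -> Prop) T (G : R -> R -> C) :=
  forall z tau, S z -> 0 <= tau <= T -> forall e, 0 < e -> exists d, 0 < d /\
    forall z' tau', S z' -> 0 <= tau' <= T -> Rabs (z' - z) < d -> Rabs (tau' - tau) < d ->
      Cmod (Cminus (G z' tau') (G z tau)) < e.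

Lemma jcont_time S T G z : 0 <= T -> jcont S T G -> S z -> forall x, continuous (fun s => G z (clampR 0 T s)) x.
Proof.
  intros HT H Sz. apply (clamp_cont (fun s => G z s) T HT).
  intros s Hs e He. destruct (H z s Sz Hs e He) as [d [Hd Hd']]. exists d; split; auto.
  intros s' Hs' Hss. apply Hd'; auto. rewrite Rminus_diag, Rabs_R0; auto.
Qed.

Lemma comp_cont (g : R -> C) t : (forall x, continuous g x) -> forall x, continuous (fun r => g (t * (1 - r * r))) x.
Proof.
  intros Hg x. apply (continuous_comp (fun r => t * (1 - r * r)) g); [|apply Hg].
  apply (ex_derive_continuous (K:=R_AbsRing) (V:=R_NormedModule)). auto_derive. auto.
Qed.

Lemma space_deriv (G G' : R -> R -> C) p q T t y : 0 <= T -> Icc p q y ->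
  (forall z tau, Icc p q z -> 0 <= tau <= T -> is_deriv_on (Icc p q) (fun z => G z tau) z (G' z tau)) ->
  jcont (Icc p q) T G -> jcont (Icc p q) T G' ->
  is_deriv_on (Icc p q) (fun z => CInt (fun r => G z (clampR 0 T (t * (1 - r * r)))) 0 1) y
    (CInt (fun r => G' y (clampR 0 T (t * (1 - r * r)))) 0 1).
Proof.
  intros HT Hy Hd HG HG'.
  apply (param_deriv (fun z r => G z (clampR 0 T (t * (1 - r * r)))) (fun z r => G' z (clampR 0 T (t * (1 - r * r)))) (Icc p q) y); [| | exact Hy |].
  - intros z Hz. apply CexInt_cont. apply (comp_cont (fun s => G z (clampR 0 T s))).
    apply (jcont_time (Icc p q) T G z HT HG Hz).
  - apply CexInt_cont. apply (comp_cont (fun s => G' y (clampR 0 T s))). apply (jcont_time (Icc p q) T G' y HT HG' Hy).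
  - intros e He.
    destruct (unif_1d G' (Icc p q) y 0 T Hy) with (e := e / 2) as [d [Hd0 Hd']]; [|lra|].
    { intros t0 Ht0 e' He'. destruct (HG' y t0 Hy Ht0 e' He') as [d [Hd0 Hd']].
      exists d; split; auto. }
    exists d; split; auto. intros h H0 Hh Sh r Hr.
    set (tau := clampR 0 T (t * (1 - r * r))).
    assert (Htau : 0 <= tau <= T) by (apply clampR_in; auto).
    replace (e * Rabs h) with (2 * (e / 2) * Rabs h) by field.
    assert (Hin : forall x, Rmin y (y + h) <= x <= Rmax y (y + h) -> Icc p q x).
    { intros x Hx. unfold Icc in *. unfold Rmin, Rmax in Hx; destruct Rle_dec; lra. }
    assert (Hcl : forall x, Rmin y (y + h) <= x <= Rmax y (y + h) -> Rabs (x - y) < d).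
    { intros x Hx. eapply Rle_lt_trans; [|exact Hh]. unfold Rmin, Rmax in Hx; destruct Rle_dec;
      unfold Rabs; repeat destruct Rcase_abs; lra. }
    apply (mvi_sym (fun z => G z tau) (fun z => G' z tau) (Icc p q) y h (G' y tau) (e/2)).
    + exact Hin.
    + intros x Hx. apply Hd; auto.
    + intros x Hx. left. apply Hd'; auto.
Qed.


Definition LA (S : R -> Prop) (f : R -> C) x l := forall e, 0 < e -> exists d, 0 < d /\
  forall h, Rabs h < d -> S (x + h) -> Cmod (Cminus (Cminus (f (x + h)) (f x)) (Cmult (RtoC h) l)) <= e * Rabs h.
Definition LAR (f : R -> R) x l := forall e, 0 < e -> exists d, 0 < d /\
  forall h, Rabs h < d -> Rabs (f (x + h) - f x - h * l) <= e * Rabs h.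

Lemma la_iff S f x l : is_deriv_on S f x l <-> LA S f x l.
Proof.
  rewrite deriv_eps. split.
  - intros H e He. destruct (H e He) as [d [Hd H']]. exists d; split; auto.
    intros h Hh Sh. destruct (Req_dec h 0) as [E|E].
    + subst. rewrite Rplus_0_r. replace (Cminus (Cminus (f x) (f x)) (Cmult (RtoC 0) l)) with (RtoC 0) by ring.
      rewrite Cmod_0, Rabs_R0. lra.
    + specialize (H' h E Hh Sh).
      replace (Cminus (Cminus (f (x + h)) (f x)) (Cmult (RtoC h) l)) with
        (Cmult (RtoC h) (Cminus (Cmult (RtoC (/ h)) (Cminus (f (x + h)) (f x))) l)).
      * rewrite Cmod_mult, Cmod_R. rewrite Rmult_comm. apply Rmult_le_compat_r; [apply Rabs_pos|lra].
      * apply injective_projections; simpl; field; auto.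
  - intros H e He. destruct (H (e/2)) as [d [Hd H']]; [lra|]. exists d; split; auto.
    intros h E Hh Sh. specialize (H' h Hh Sh).
    replace (Cminus (Cmult (RtoC (/ h)) (Cminus (f (x + h)) (f x))) l) with
      (Cmult (RtoC (/ h)) (Cminus (Cminus (f (x + h)) (f x)) (Cmult (RtoC h) l))).
    + rewrite Cmod_mult, Cmod_R, Rabs_inv.
      apply Rle_lt_trans with (/ Rabs h * (e / 2 * Rabs h)).
      * apply Rmult_le_compat_l; auto. left; apply Rinv_0_lt_compat, Rabs_pos_lt; auto.
      * assert (0 < Rabs h) by (apply Rabs_pos_lt; auto).
        replace (/ Rabs h * (e / 2 * Rabs h)) with (e/2) by (field; lra). lra.
    + apply injective_projections; simpl; field; auto.
Qed.

Lemma derive_la S f x l : @is_derive R_AbsRing C_R_NormedModule f x l -> LA S f x l.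
Proof.
  intros [_ H]. specialize (H x (fun P HP => HP)).
  intros e He. destruct (H (mkposreal _ He)) as [d Hd]. exists d; split; [apply cond_pos|].
  intros h Hh _. specialize (Hd (x + h)). simpl in Hd.
  assert (ball x d (x + h)) by (apply ball_R; replace (x + h - x) with h by ring; auto).
  specialize (Hd H0). rewrite norm_C in Hd.
  replace (Cminus (Cminus (f (x + h)) (f x)) (Cmult (RtoC h) l)) with
    (@minus C_R_NormedModule (@minus C_R_NormedModule (f (x + h)) (f x)) (@scal R_AbsRing C_R_NormedModule (@minus R_NormedModule (x + h) x) l)).
  - eapply Rle_trans; [exact Hd|]. right. f_equal. unfold norm; simpl. unfold abs; simpl. f_equal.
    unfold minus, plus, opp; simpl. ring.
  - rewrite scal_C. rewrite !minus_C. f_equal. f_equal. f_equal.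
    unfold minus, plus, opp; simpl. ring.
Qed.

Lemma larR_of_derive (f : R -> R) x l : is_derive f x l -> LAR f x l.
Proof.
  intros H. apply is_derive_Reals in H. intros e He.
  destruct (H e He) as [d Hd]. exists d; split; [apply cond_pos|].
  intros h Hh. destruct (Req_dec h 0) as [E|E].
  - subst. rewrite Rplus_0_r, Rabs_R0. replace (f x - f x - 0 * l) with 0 by ring. rewrite Rabs_R0; lra.
  - specialize (Hd h E Hh).
    replace (f (x + h) - f x - h * l) with (h * ((f (x + h) - f x) / h - l)) by (field; auto).
    rewrite Rabs_mult, Rmult_comm. apply Rmult_le_compat_r; [apply Rabs_pos|lra].
Qed.

Lemma la_bound S f x l : LA S f x l -> exists d, 0 < d /\ forall h, Rabs h < d -> S (x + h) ->
   Cmod (Cminus (f (x + h)) (f x)) <= Rabs h * (Cmod l + 1).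
Proof.
  intros H. destruct (H 1 Rlt_0_1) as [d [Hd H']]. exists d; split; auto. intros h Hh Sh.
  specialize (H' h Hh Sh).
  replace (Cminus (f (x + h)) (f x)) with (Cplus (Cminus (Cminus (f (x + h)) (f x)) (Cmult (RtoC h) l)) (Cmult (RtoC h) l)) by ring.
  eapply Rle_trans; [apply Cmod_triangle|]. rewrite Cmod_mult, Cmod_R. lra.
Qed.

Lemma la_minus S f g x l1 l2 : LA S f x l1 -> LA S g x l2 ->
  LA S (fun s => Cminus (f s) (g s)) x (Cminus l1 l2).
Proof.
  intros H1 H2 e He. destruct (H1 (e/2)) as [d1 [Hd1 H1']]; [lra|]. destruct (H2 (e/2)) as [d2 [Hd2 H2']]; [lra|].
  exists (Rmin d1 d2); split; [apply Rmin_pos; auto|]. intros h Hh Sh.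
  assert (Rabs h < d1) by (eapply Rlt_le_trans; [exact Hh|apply Rmin_l]).
  assert (Rabs h < d2) by (eapply Rlt_le_trans; [exact Hh|apply Rmin_r]).
  specialize (H1' h H Sh). specialize (H2' h H0 Sh).
  replace (Cminus (Cminus (Cminus (f (x + h)) (g (x + h))) (Cminus (f x) (g x))) (Cmult (RtoC h) (Cminus l1 l2)))
    with (Cminus (Cminus (Cminus (f (x + h)) (f x)) (Cmult (RtoC h) l1)) (Cminus (Cminus (g (x + h)) (g x)) (Cmult (RtoC h) l2))) by ring.
  eapply Rle_trans; [apply (Cmod_sub_tri _ (RtoC 0))|].
  replace (Cminus (Cminus (Cminus (f (x + h)) (f x)) (Cmult (RtoC h) l1)) (RtoC 0)) with
    (Cminus (Cminus (f (x + h)) (f x)) (Cmult (RtoC h) l1)) by ring.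
  rewrite (Cmod_sym (RtoC 0)). replace (Cminus (Cminus (Cminus (g (x + h)) (g x)) (Cmult (RtoC h) l2)) (RtoC 0)) with
    (Cminus (Cminus (g (x + h)) (g x)) (Cmult (RtoC h) l2)) by ring. lra.
Qed.

Lemma la_ext S f g x l : (forall y, S y -> f y = g y) -> S x -> LA S f x l -> LA S g x l.
Proof. intros E Sx. rewrite <- !la_iff. apply deriv_ext; auto. Qed.

Lemma la_prodR S (phi : R -> R) (A : R -> C) x dphi dA :
  LAR phi x dphi -> LA S A x dA ->
  LA S (fun s => Cmult (RtoC (phi s)) (A s)) x (Cplus (Cmult (RtoC dphi) (A x)) (Cmult (RtoC (phi x)) dA)).
Proof.
  intros Hp HA e He.
  destruct (la_bound _ _ _ _ HA) as [d0 [Hd0 Hb]].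
  set (M := Cmod (A x) + Cmod dA + 1).
  assert (HM : 0 < M) by (unfold M; pose proof (Cmod_ge_0 (A x)); pose proof (Cmod_ge_0 dA); lra).
  destruct (Hp (e / (3 * M))) as [d1 [Hd1 Hp']]; [apply Rdiv_lt_0_compat; lra|].
  pose proof (Rabs_pos (phi x)) as Hpx. pose proof (Rabs_pos dphi) as Hdp. pose proof (Cmod_ge_0 dA) as HdA.
  destruct (HA (e / (3 * (Rabs (phi x) + 1)))) as [d2 [Hd2 HA']]; [apply Rdiv_lt_0_compat; lra|].
  set (d3 := e / (3 * ((Rabs dphi + 1) * (Cmod dA + 1)))).
  assert (Hd3 : 0 < d3) by (unfold d3; apply Rdiv_lt_0_compat; nra).
  exists (Rmin (Rmin d0 1) (Rmin d1 (Rmin d2 d3))).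
  split; [repeat apply Rmin_pos; lra|].
  intros h Hh Sh.
  assert (h0 : Rabs h < d0 /\ Rabs h < 1 /\ Rabs h < d1 /\ Rabs h < d2 /\ Rabs h < d3).
  { pose proof (Rmin_l (Rmin d0 1) (Rmin d1 (Rmin d2 d3))). pose proof (Rmin_r (Rmin d0 1) (Rmin d1 (Rmin d2 d3))).
    pose proof (Rmin_l d0 1). pose proof (Rmin_r d0 1). pose proof (Rmin_l d1 (Rmin d2 d3)).
    pose proof (Rmin_r d1 (Rmin d2 d3)). pose proof (Rmin_l d2 d3). pose proof (Rmin_r d2 d3). lra. }
  destruct h0 as [h0 [h1 [h2 [h3 h4]]]].
  specialize (Hb h h0 Sh). specialize (Hp' h h2). specialize (HA' h h3 Sh).
  pose proof (Rabs_pos h) as Hh0.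
  assert (HAb : Cmod (A (x + h)) <= M).
  { replace (A (x + h)) with (Cplus (Cminus (A (x + h)) (A x)) (A x)) by ring.
    eapply Rle_trans; [apply Cmod_triangle|]. unfold M. nra. }
  replace (Cminus (Cminus (Cmult (RtoC (phi (x + h))) (A (x + h))) (Cmult (RtoC (phi x)) (A x)))
      (Cmult (RtoC h) (Cplus (Cmult (RtoC dphi) (A x)) (Cmult (RtoC (phi x)) dA)))) with
    (Cplus (Cplus (Cmult (RtoC (phi (x + h) - phi x - h * dphi)) (A (x + h)))
       (Cmult (RtoC (h * dphi)) (Cminus (A (x + h)) (A x))))
       (Cmult (RtoC (phi x)) (Cminus (Cminus (A (x + h)) (A x)) (Cmult (RtoC h) dA))))
    by (apply injective_projections; simpl; ring).
  eapply Rle_trans; [apply Cmod_triangle|]. eapply Rle_trans; [apply Rplus_le_compat_r, Cmod_triangle|].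
  rewrite !Cmod_mult, !Cmod_R, Rabs_mult.
  assert (T1 : Rabs (phi (x + h) - phi x - h * dphi) * Cmod (A (x + h)) <= e / 3 * Rabs h).
  { apply Rle_trans with (e / (3 * M) * Rabs h * M).
    - apply Rmult_le_compat; auto using Rabs_pos, Cmod_ge_0.
    - right; field; lra. }
  assert (T2 : Rabs h * Rabs dphi * Cmod (Cminus (A (x + h)) (A x)) <= e / 3 * Rabs h).
  { apply Rle_trans with (Rabs h * Rabs dphi * (Rabs h * (Cmod dA + 1))).
    - apply Rmult_le_compat_l; [nra|auto].
    - apply Rle_trans with (Rabs h * (d3 * ((Rabs dphi + 1) * (Cmod dA + 1)))).
      + replace (Rabs h * Rabs dphi * (Rabs h * (Cmod dA + 1))) with (Rabs h * ((Rabs dphi * (Cmod dA + 1)) * Rabs h)) by ring.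
        apply Rmult_le_compat_l; [lra|]. rewrite Rmult_comm.
        apply Rmult_le_compat; [lra|nra|lra|]. apply Rmult_le_compat_r; lra.
      + right. unfold d3. field. nra. }
  assert (T3 : Rabs (phi x) * Cmod (Cminus (Cminus (A (x + h)) (A x)) (Cmult (RtoC h) dA)) <= e / 3 * Rabs h).
  { apply Rle_trans with (Rabs (phi x) * (e / (3 * (Rabs (phi x) + 1)) * Rabs h)).
    - apply Rmult_le_compat_l; auto.
    - apply Rle_trans with ((Rabs (phi x) + 1) * (e / (3 * (Rabs (phi x) + 1)) * Rabs h)).
      + apply Rmult_le_compat_r; [|lra]. apply Rmult_le_pos; auto. left; apply Rdiv_lt_0_compat; lra.
      + right; field; lra. }
  lra.
Qed.

Lemma la_chain S1 S2 (phi : R -> R) (v : R -> C) r dphi L :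
  LAR phi r dphi -> LA S2 v (phi r) L -> (forall h, S1 (r + h) -> S2 (phi (r + h))) ->
  LA S1 (fun s => v (phi s)) r (Cmult (RtoC dphi) L).
Proof.
  intros Hp Hv HS e He.
  pose proof (Rabs_pos dphi) as Hdp. pose proof (Cmod_ge_0 L) as HL.
  destruct (Hp 1 Rlt_0_1) as [d1 [Hd1 Hp1]].
  destruct (Hp (e / (2 * (Cmod L + 1)))) as [d2 [Hd2 Hp2]]; [apply Rdiv_lt_0_compat; lra|].
  destruct (Hv (e / (2 * (Rabs dphi + 1)))) as [dv [Hdv Hv']]; [apply Rdiv_lt_0_compat; lra|].
  exists (Rmin d1 (Rmin d2 (dv / (Rabs dphi + 1)))).
  split; [repeat apply Rmin_pos; try lra; apply Rdiv_lt_0_compat; lra|].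
  intros h Hh Sh.
  assert (h0 : Rabs h < d1 /\ Rabs h < d2 /\ Rabs h < dv / (Rabs dphi + 1)).
  { pose proof (Rmin_l d1 (Rmin d2 (dv / (Rabs dphi + 1)))). pose proof (Rmin_r d1 (Rmin d2 (dv / (Rabs dphi + 1)))).
    pose proof (Rmin_l d2 (dv / (Rabs dphi + 1))). pose proof (Rmin_r d2 (dv / (Rabs dphi + 1))). lra. }
  destruct h0 as [h1 [h2 h3]]. specialize (Hp1 h h1). specialize (Hp2 h h2).
  pose proof (Rabs_pos h) as Hh0.
  set (k := phi (r + h) - phi r).
  assert (Hk : Rabs k <= Rabs h * (Rabs dphi + 1)).
  { replace k with ((phi (r + h) - phi r - h * dphi) + h * dphi) by (unfold k; ring).
    eapply Rle_trans; [apply Rabs_triang|]. rewrite Rabs_mult. lra. }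
  assert (Hk2 : Rabs k < dv).
  { eapply Rle_lt_trans; [exact Hk|]. apply Rlt_le_trans with (dv / (Rabs dphi + 1) * (Rabs dphi + 1)).
    - apply Rmult_lt_compat_r; lra.
    - right; field; lra. }
  assert (Ek : phi (r + h) = phi r + k) by (unfold k; ring).
  specialize (Hv' k Hk2). rewrite <- Ek in Hv'. specialize (Hv' (HS h Sh)).
  replace (Cminus (Cminus (v (phi (r + h))) (v (phi r))) (Cmult (RtoC h) (Cmult (RtoC dphi) L))) with
    (Cplus (Cminus (Cminus (v (phi (r + h))) (v (phi r))) (Cmult (RtoC k) L)) (Cmult (RtoC (k - h * dphi)) L))
    by (apply injective_projections; simpl; ring).
  eapply Rle_trans; [apply Cmod_triangle|]. rewrite Cmod_mult, Cmod_R.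
  assert (Rabs (k - h * dphi) * Cmod L <= e / 2 * Rabs h).
  { apply Rle_trans with (e / (2 * (Cmod L + 1)) * Rabs h * (Cmod L + 1)).
    - apply Rmult_le_compat; [apply Rabs_pos|apply Cmod_ge_0|unfold k; exact Hp2|lra].
    - right; field; lra. }
  assert (e / (2 * (Rabs dphi + 1)) * Rabs k <= e / 2 * Rabs h).
  { apply Rle_trans with (e / (2 * (Rabs dphi + 1)) * (Rabs h * (Rabs dphi + 1))).
    - apply Rmult_le_compat_l; auto. left; apply Rdiv_lt_0_compat; lra.
    - right; field; lra. }
  lra.
Qed.

Lemma ftc (f df : R -> C) a b : a <= b ->
  (forall x, a <= x <= b -> is_deriv_on (Icc a b) f x (df x)) -> (forall x, continuous df x) ->
  CInt df a b = Cminus (f b) (f a).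
Proof.
  intros Hab Hf Hdf.
  set (H := fun x => Cminus (CInt df a x) (f x)).
  assert (HD : forall x, a <= x <= b -> is_deriv_on (Icc a b) H x (Cminus (df x) (df x))).
  { intros x Hx. apply la_iff. apply la_minus.
    - apply derive_la. apply (is_derive_RInt (V:=C_R_NormedModule) df (fun s => CInt df a s) a x).
      + exists (mkposreal 1 Rlt_0_1). intros z _. apply (RInt_correct (V:=C_R_CompleteNormedModule)).
        apply CexInt_cont. exact Hdf.
      + apply Hdf.
    - apply la_iff. apply Hf; auto. }
  assert (E : Cminus (H b) (H a) = RtoC 0).
  { apply Cmod_small. intros e He.
    assert (He' : 0 < e / (2 * (b - a) + 2)) by (apply Rdiv_lt_0_compat; lra).
    pose proof (mvi_C H (fun x => Cminus (df x) (df x)) (Icc a b) a b (RtoC 0) (e / (2 * (b - a) + 2)) Hab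
      (fun x Hx => Hx) HD) as M.
    assert (Hz : forall x, a <= x <= b -> Cmod (Cminus (Cminus (df x) (df x)) (RtoC 0)) <= e / (2 * (b - a) + 2)).
    { intros x _. replace (Cminus (Cminus (df x) (df x)) (RtoC 0)) with (RtoC 0) by ring. rewrite Cmod_0. lra. }
    specialize (M Hz).
    replace (Cminus (Cminus (H b) (H a)) (Cmult (RtoC (b - a)) (RtoC 0))) with (Cminus (H b) (H a)) in M by ring.
    eapply Rle_lt_trans; [exact M|].
    apply Rlt_le_trans with (e / (2 * (b - a) + 2) * (2 * (b - a) + 2)); [|right; field; lra].
    nra. }
  assert (Ha : CInt df a a = RtoC 0) by (unfold CInt; rewrite RInt_point; reflexivity).
  unfold H in E. rewrite Ha in E.
  replace (CInt df a b) with (Cplus (Cminus (Cminus (CInt df a b) (f b)) (Cminus (RtoC 0) (f a))) (Cminus (f b) (f a))) by ring.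
  rewrite E. ring.
Qed.


Definition Wc T (v : R -> C) := forall s, 0 <= s <= T -> forall e, 0 < e -> exists d, 0 < d /\
  forall s', 0 <= s' <= T -> Rabs (s' - s) < d -> Cmod (Cminus (v s') (v s)) < e.

Lemma contC_plus (f g : R -> C) x : continuous f x -> continuous g x -> continuous (fun y => Cplus (f y) (g y)) x.
Proof. intros. apply (continuous_plus (V:=C_R_NormedModule) f g x); auto. Qed.

Lemma contC_mulR (phi : R -> R) (g : R -> C) x : continuous phi x -> continuous g x ->
  continuous (fun y => Cmult (RtoC (phi y)) (g y)) x.
Proof.
  intros H1 H2. apply (continuous_ext (fun y => @scal R_AbsRing C_R_NormedModule (phi y) (g y))).
  { intros; apply scal_C. }
  apply (continuous_scal (V:=C_R_NormedModule) phi g); auto.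
Qed.

Lemma unif_time T (v : R -> C) : 0 <= T -> Wc T v -> forall e, 0 < e -> exists d, 0 < d /\
  forall s s', 0 <= s <= T -> 0 <= s' <= T -> Rabs (s' - s) < d -> Cmod (Cminus (v s') (v s)) < e.
Proof.
  intros HT H e He.
  destruct (unif_1d (fun z tau => v (clampR 0 T (tau + z))) (fun _ => True) 0 0 T I) with (e := e) as [d [Hd Hd']]; auto.
  - intros t0 Ht0 e' He'. destruct (H t0 Ht0 e' He') as [d [Hd Hd']].
    exists (d / 2); split; [lra|]. intros z tau _ Htau Hz Htt.
    rewrite Rplus_0_r, (clampR_id 0 T t0) by lra.
    apply Hd'; [apply clampR_in; auto|].
    replace (clampR 0 T (tau + z) - t0) with (clampR 0 T (tau + z) - clampR 0 T t0) by (rewrite (clampR_id 0 T t0); lra).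
    eapply Rle_lt_trans; [apply clampR_lip; auto|]. rewrite Rminus_0_r in Hz.
    replace (tau + z - t0) with ((tau - t0) + z) by ring.
    eapply Rle_lt_trans; [apply Rabs_triang|]. lra.
  - exists d; split; auto. intros s s' Hs Hs' Hss.
    specialize (Hd' (s' - s) s I Hs ltac:(rewrite Rminus_0_r; auto)).
    rewrite Rplus_0_r in Hd'. replace (s + (s' - s)) with s' in Hd' by ring.
    rewrite !clampR_id in Hd' by lra. exact Hd'.
Qed.

Lemma Wc_cont T v : 0 <= T -> Wc T v -> forall x, continuous (fun s => v (clampR 0 T s)) x.
Proof. intros. apply clamp_cont; auto. Qed.

Lemma time_A (v v' : R -> C) T t : 0 <= t <= T ->
  (forall s, 0 <= s <= T -> is_deriv_on (Icc 0 T) v s (v' s)) -> Wc T v -> Wc T v' ->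
  is_deriv_on (Icc 0 T) (fun s => CInt (fun r => v (clampR 0 T (s * (1 - r * r)))) 0 1) t
    (CInt (fun r => Cmult (RtoC (1 - r * r)) (v' (clampR 0 T (t * (1 - r * r))))) 0 1).
Proof.
  intros Ht Hd Hv Hv'.
  assert (HT : 0 <= T) by lra.
  apply (param_deriv (fun s r => v (clampR 0 T (s * (1 - r * r))))
     (fun s r => Cmult (RtoC (1 - r * r)) (v' (clampR 0 T (s * (1 - r * r))))) (Icc 0 T) t); [| |exact Ht|].
  - intros z _. apply CexInt_cont. intros x.
    apply (comp_cont (fun s => v (clampR 0 T s)) z (Wc_cont T v HT Hv) x).
  - apply CexInt_cont. intros x. apply contC_mulR.
    + apply (ex_derive_continuous (K:=R_AbsRing) (V:=R_NormedModule)). auto_derive. auto.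
    + apply (comp_cont (fun s => v' (clampR 0 T s)) t (Wc_cont T v' HT Hv') x).
  - intros e He.
    destruct (unif_time T v' HT Hv' (e/2)) as [d [Hd0 Hd']]; [lra|].
    exists d; split; auto. intros h H0 Hh Sh r Hr.
    set (sg := t * (1 - r * r)). set (h' := h * (1 - r * r)).
    assert (H1r : 0 <= 1 - r * r <= 1) by nra.
    assert (Hsg : 0 <= sg <= T) by (unfold sg; unfold Icc in Sh; nra).
    assert (Hsg' : 0 <= sg + h' <= T) by (unfold sg, h'; unfold Icc in Sh; nra).
    assert (Eh : (t + h) * (1 - r * r) = sg + h') by (unfold sg, h'; ring).
    rewrite Eh. rewrite !clampR_id by auto.
    assert (Hh' : Rabs h' <= Rabs h) by (unfold h'; rewrite Rabs_mult, (Rabs_right (1 - r*r)) by lra;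
       pose proof (Rabs_pos h); nra).
    replace (Cminus (Cminus (v (sg + h')) (v sg)) (Cmult (RtoC h) (Cmult (RtoC (1 - r * r)) (v' sg)))) with
      (Cminus (Cminus (v (sg + h')) (v sg)) (Cmult (RtoC h') (v' sg))) by (unfold h'; apply injective_projections; simpl; ring).
    assert (Hin : forall x, Rmin sg (sg + h') <= x <= Rmax sg (sg + h') -> 0 <= x <= T /\ Rabs (x - sg) <= Rabs h').
    { intros x Hx. unfold Rmin, Rmax in Hx; destruct Rle_dec; split; try lra;
      unfold Rabs; repeat destruct Rcase_abs; lra. }
    eapply Rle_trans.
    + apply (mvi_sym v v' (Icc 0 T) sg h' (v' sg) (e/2)).
      * intros x Hx. apply Hin; auto.
      * intros x Hx. apply Hd. apply Hin; auto.
      * intros x Hx. left. destruct (Hin x Hx). apply Hd'; auto. lra.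
    + pose proof (Rabs_pos h'). nra.
Qed.


Lemma ibp (v v' : R -> C) T t : 0 < t <= T ->
  (forall s, 0 <= s <= T -> is_deriv_on (Icc 0 T) v s (v' s)) -> Wc T v -> Wc T v' -> v 0 = RtoC 0 ->
  CInt (fun r => v (clampR 0 T (t * (1 - r * r)))) 0 1 =
  Cmult (RtoC (2 * t)) (CInt (fun r => Cmult (RtoC (r * r)) (v' (clampR 0 T (t * (1 - r * r))))) 0 1).
Proof.
  intros Ht Hd Hv Hv' H0.
  assert (HT : 0 <= T) by lra.
  set (V := fun r => v (clampR 0 T (t * (1 - r * r)))).
  set (V' := fun r => v' (clampR 0 T (t * (1 - r * r)))).
  assert (cV : forall x, continuous V x) by (intros x; apply (comp_cont (fun s => v (clampR 0 T s)) t (Wc_cont T v HT Hv) x)).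
  assert (cV' : forall x, continuous V' x) by (intros x; apply (comp_cont (fun s => v' (clampR 0 T s)) t (Wc_cont T v' HT Hv') x)).
  change (CInt V 0 1 = Cmult (RtoC (2 * t)) (CInt (fun r => Cmult (RtoC (r * r)) (V' r)) 0 1)).
  set (G := fun r => Cmult (RtoC r) (V r)).
  set (dG := fun r => Cplus (Cmult (RtoC 1) (V r)) (Cmult (RtoC r) (Cmult (RtoC (- 2 * t * r)) (V' r)))).
  assert (HG : forall r, 0 <= r <= 1 -> is_deriv_on (Icc 0 1) G r (dG r)).
  { intros r Hr. apply la_iff. unfold G, dG.
    apply (la_prodR (Icc 0 1) (fun s => s) V r 1 (Cmult (RtoC (- 2 * t * r)) (V' r))).
    - intros e He. exists 1; split; [lra|]. intros h _. replace (r + h - r - h * 1) with 0 by ring.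
      rewrite Rabs_R0. pose proof (Rabs_pos h). nra.
    - apply (la_ext (Icc 0 1) (fun s => v (t * (1 - s * s)))); [| exact Hr|].
      { intros y Hy. unfold V. rewrite clampR_id; auto. unfold Icc in Hy. assert (0 <= y * y <= 1) by nra. split; nra. }
      unfold V'. assert (0 <= r * r <= 1) by nra. rewrite clampR_id by (split; nra).
      apply (la_chain (Icc 0 1) (Icc 0 T) (fun s => t * (1 - s * s)) v r (- 2 * t * r) (v' (t * (1 - r * r)))).
      + apply larR_of_derive. auto_derive; auto. ring.
      + apply la_iff. apply Hd. split; nra.
      + intros h Hh. unfold Icc in *. assert (0 <= (r + h) * (r + h) <= 1) by nra. split; nra. }
  assert (cdG : forall x, continuous dG x).
  { intros x. unfold dG. apply contC_plus.
    - apply contC_mulR; [apply continuous_const| apply cV].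
    - apply contC_mulR; [apply continuous_id|]. apply contC_mulR; [|apply cV'].
      apply (ex_derive_continuous (K:=R_AbsRing) (V:=R_NormedModule)). auto_derive. auto. }
  pose proof (ftc G dG 0 1 ltac:(lra) HG cdG) as F.
  assert (EG : Cminus (G 1) (G 0) = RtoC 0).
  { unfold G, V. replace (t * (1 - 1 * 1)) with 0 by ring. rewrite clampR_id by lra. rewrite H0.
    apply injective_projections; simpl; ring. }
  rewrite EG in F.
  assert (eV : CexInt V 0 1) by (apply CexInt_cont; auto).
  assert (eW : CexInt (fun r => Cmult (RtoC (r * r)) (V' r)) 0 1).
  { apply CexInt_cont. intros x. apply contC_mulR; [|apply cV'].
    apply (ex_derive_continuous (K:=R_AbsRing) (V:=R_NormedModule)). auto_derive. auto. }
  assert (E2 : CInt dG 0 1 = Cplus (CInt V 0 1) (Cmult (RtoC (- 2 * t)) (CInt (fun r => Cmult (RtoC (r * r)) (V' r)) 0 1))).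
  { rewrite <- (CInt_scal (fun r => Cmult (RtoC (r * r)) (V' r)) (- 2 * t) 0 1 eW).
    rewrite <- (CInt_plus V (fun r => Cmult (RtoC (- 2 * t)) (Cmult (RtoC (r * r)) (V' r))) 0 1 eV (CexInt_scal _ _ _ _ eW)).
    apply CInt_ext. intros x _. unfold dG. apply injective_projections; simpl; ring. }
  rewrite E2 in F. fold V. fold V'.
  replace (CInt V 0 1) with (Cminus (Cplus (CInt V 0 1) (Cmult (RtoC (- 2 * t)) (CInt (fun r => Cmult (RtoC (r * r)) (V' r)) 0 1)))
     (Cmult (RtoC (- 2 * t)) (CInt (fun r => Cmult (RtoC (r * r)) (V' r)) 0 1))) by ring.
  rewrite F. generalize (CInt (fun r => Cmult (RtoC (r * r)) (V' r)) 0 1). intro z.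
  apply injective_projections; simpl; ring.
Qed.

Lemma la_val S f x l l' : LA S f x l -> l = l' -> LA S f x l'.
Proof. intros H E; subst; auto. Qed.

Lemma time_deriv (v v' : R -> C) T t : 0 < t <= T ->
  (forall s, 0 <= s <= T -> is_deriv_on (Icc 0 T) v s (v' s)) -> Wc T v -> Wc T v' -> v 0 = RtoC 0 ->
  is_deriv_on (Ioc 0 T) (fun s => Cmult (RtoC (2 * sqrt s / sqrt PI)) (CInt (fun r => v (clampR 0 T (s * (1 - r * r)))) 0 1)) t
    (Cmult (RtoC (2 * sqrt t / sqrt PI)) (CInt (fun r => v' (clampR 0 T (t * (1 - r * r)))) 0 1)).
Proof.
  intros Ht Hd Hv Hv' H0.
  assert (HT : 0 <= T) by lra.
  assert (Hst : 0 < sqrt t) by (apply sqrt_lt_R0; lra).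
  assert (Hsp : 0 < sqrt PI) by (apply sqrt_lt_R0, PI_RGT_0).
  assert (Ett : sqrt t * sqrt t = t) by (apply sqrt_sqrt; lra).
  pose proof (time_A v v' T t ltac:(lra) Hd Hv Hv') as HA.
  apply (deriv_sub (Icc 0 T) (Ioc 0 T)) in HA; [|unfold Icc, Ioc; intros; lra].
  apply la_iff in HA.
  assert (Hk : LAR (fun s => 2 * sqrt s / sqrt PI) t (/ (sqrt t * sqrt PI))).
  { apply larR_of_derive. auto_derive; [lra|]. field. lra. }
  pose proof (la_prodR _ _ _ _ _ _ Hk HA) as P.
  apply la_iff. eapply la_val; [exact P|]. cbv beta.
  rewrite (ibp v v' T t Ht Hd Hv Hv' H0).
  set (V' := fun r => v' (clampR 0 T (t * (1 - r * r)))).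
  assert (cV' : forall x, continuous V' x) by (intros x; apply (comp_cont (fun s => v' (clampR 0 T s)) t (Wc_cont T v' HT Hv') x)).
  assert (e1 : CexInt (fun r => Cmult (RtoC (r * r)) (V' r)) 0 1).
  { apply CexInt_cont. intros x. apply contC_mulR; [|apply cV'].
    apply (ex_derive_continuous (K:=R_AbsRing) (V:=R_NormedModule)). auto_derive. auto. }
  assert (e2 : CexInt (fun r => Cmult (RtoC (1 - r * r)) (V' r)) 0 1).
  { apply CexInt_cont. intros x. apply contC_mulR; [|apply cV'].
    apply (ex_derive_continuous (K:=R_AbsRing) (V:=R_NormedModule)). auto_derive. auto. }
  assert (EV : CInt V' 0 1 = Cplus (CInt (fun r => Cmult (RtoC (r * r)) (V' r)) 0 1) (CInt (fun r => Cmult (RtoC (1 - r * r)) (V' r)) 0 1)).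
  { rewrite <- (CInt_plus _ _ 0 1 e1 e2). apply CInt_ext. intros x _. apply injective_projections; simpl; ring. }
  change (Cplus (Cmult (RtoC (/ (sqrt t * sqrt PI))) (Cmult (RtoC (2 * t)) (CInt (fun r => Cmult (RtoC (r * r)) (V' r)) 0 1)))
     (Cmult (RtoC (2 * sqrt t / sqrt PI)) (CInt (fun r => Cmult (RtoC (1 - r * r)) (V' r)) 0 1)) =
    Cmult (RtoC (2 * sqrt t / sqrt PI)) (CInt V' 0 1)).
  rewrite EV.
  generalize (CInt (fun r => Cmult (RtoC (r * r)) (V' r)) 0 1). generalize (CInt (fun r => Cmult (RtoC (1 - r * r)) (V' r)) 0 1).
  intros z1 z2.
  replace (2 * t) with (2 * (sqrt t * sqrt t)) by (rewrite Ett; ring). apply injective_projections; simpl; field; lra.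
Qed.


Lemma is_RInt_Ci f a b L : @is_RInt C_R_NormedModule f a b L ->
  @is_RInt C_R_NormedModule (fun r => Cmult Ci (f r)) a b (Cmult Ci L).
Proof.
  intros HL.
  pose proof (is_RInt_fct_extend_fst (U:=R_NormedModule) (V:=R_NormedModule) f a b L HL) as H1.
  pose proof (is_RInt_fct_extend_snd (U:=R_NormedModule) (V:=R_NormedModule) f a b L HL) as H2.
  pose proof (is_RInt_opp (V:=R_NormedModule) _ _ _ _ H2) as H3.
  pose proof (is_RInt_fct_extend_pair (U:=R_NormedModule) (V:=R_NormedModule) (fun r => (opp (snd (f r)), fst (f r))) a b _ _ H3 H1) as H4.
  replace (Cmult Ci L) with ((opp (snd L), fst L) : C).
  - eapply is_RInt_ext; [|exact H4]. intros x _. apply injective_projections; simpl; unfold opp; simpl; ring.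
  - apply injective_projections; simpl; unfold opp; simpl; ring.
Qed.

Lemma CInt_Ci f a b : CexInt f a b -> CInt (fun r => Cmult Ci (f r)) a b = Cmult Ci (CInt f a b).
Proof.
  intros H. pose proof (RInt_correct (V:=C_R_CompleteNormedModule) f a b H) as HL.
  unfold CInt. apply (is_RInt_unique (V:=C_R_CompleteNormedModule)). apply is_RInt_Ci. exact HL.
Qed.

Lemma CexInt_Ci f a b : CexInt f a b -> CexInt (fun r => Cmult Ci (f r)) a b.
Proof.
  intros H. pose proof (RInt_correct (V:=C_R_CompleteNormedModule) f a b H) as HL.
  eexists. apply is_RInt_Ci. exact HL.
Qed.

Lemma Wc_cyl xl xr xb xt T f y1 y2 : cont_on_cyl xl xr xb xt T f -> Icc xl xr y1 -> Icc xb xt y2 ->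
  Wc T (fun s => f y1 y2 s).
Proof.
  intros Hc H1 H2 s Hs e He.
  destruct (cyl_eps xl xr xb xt T f Hc y1 y2 s (conj H1 (conj H2 Hs)) e He) as [d [Hd Hd']].
  exists d; split; auto. intros s' Hs' Hss. apply Hd'; auto.
  - split; [exact H1|split; [exact H2|exact Hs']].
  - rewrite Rminus_diag, Rabs_R0; auto.
  - rewrite Rminus_diag, Rabs_R0; auto.
Qed.

Lemma jcont2 xl xr xb xt T f x1 : cont_on_cyl xl xr xb xt T f -> Icc xl xr x1 ->
  jcont (Icc xb xt) T (fun z tau => f x1 z tau).
Proof.
  intros Hc H1 z tau Hz Htau e He.
  destruct (cyl_eps xl xr xb xt T f Hc x1 z tau (conj H1 (conj Hz Htau)) e He) as [d [Hd Hd']].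
  exists d; split; auto. intros z' tau' Hz' Htau' Hzz Htt. apply Hd'; auto.
  - split; [exact H1|split; [exact Hz'|exact Htau']].
  - rewrite Rminus_diag, Rabs_R0; auto.
Qed.

Lemma jcont1 xl xr xb xt T f x2 : cont_on_cyl xl xr xb xt T f -> Icc xb xt x2 ->
  jcont (Icc xl xr) T (fun z tau => f z x2 tau).
Proof.
  intros Hc H2 z tau Hz Htau e He.
  destruct (cyl_eps xl xr xb xt T f Hc z x2 tau (conj Hz (conj H2 Htau)) e He) as [d [Hd Hd']].
  exists d; split; auto. intros z' tau' Hz' Htau' Hzz Htt. apply Hd'; auto.
  - split; [exact Hz'|split; [exact H2|exact Htau']].
  - rewrite Rminus_diag, Rabs_R0; auto.
Qed.

Lemma pts_Icc p q y : p < q -> Icc p q y -> forall d, 0 < d -> exists h, h <> 0 /\ Rabs h < d /\ Icc p q (y + h).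
Proof.
  intros Hpq Hy d Hd. unfold Icc in *. set (m := Rmin d (q - p) / 2).
  assert (0 < m /\ m < d /\ m <= (q - p) / 2).
  { unfold m. pose proof (Rmin_l d (q - p)). pose proof (Rmin_r d (q - p)).
    assert (0 < Rmin d (q - p)) by (apply Rmin_pos; lra). lra. }
  destruct (Rle_dec y ((p + q) / 2)).
  - exists m. split; [lra|split; [rewrite Rabs_right; lra|lra]].
  - exists (- m). split; [lra|split; [rewrite Rabs_Ropp, Rabs_right; lra|lra]].
Qed.

Lemma pts_Ioc T t : 0 < t <= T -> forall d, 0 < d -> exists h, h <> 0 /\ Rabs h < d /\ Ioc 0 T (t + h).
Proof.
  intros Ht d Hd. set (m := Rmin d t / 2).
  assert (0 < m /\ m < d /\ m < t).
  { unfold m. pose proof (Rmin_l d t). pose proof (Rmin_r d t).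
    assert (0 < Rmin d t) by (apply Rmin_pos; lra). lra. }
  exists (- m). unfold Ioc. split; [lra|split; [rewrite Rabs_Ropp, Rabs_right; lra|lra]].
Qed.

Lemma final_alg (A B D d1 d2 cm cp : C) :
  Cminus (Cplus A (Cmult cm D)) (Cmult (Cmult (RtoC (/2)) cp) d2) = RtoC 0 ->
  Cminus (Cplus B (Cmult cm D)) (Cmult (Cmult (RtoC (/2)) cp) d1) = RtoC 0 ->
  Cplus (Cplus d1 d2) (Cmult Ci D) = RtoC 0 ->
  Cplus (Cmult cp Ci) cm = RtoC 0 ->
  Cplus (Cplus A B) (Cmult (Cmult (RtoC (3/2)) cm) D) = RtoC 0.
Proof.
  intros E1 E2 E3 E4.
  assert (h : RtoC (3/2) = (1 + 1 - RtoC (/2))%C) by (apply injective_projections; simpl; field).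
  rewrite h.
  replace (Cplus (Cplus A B) (Cmult (Cmult (1 + 1 - RtoC (/2))%C cm) D)) with
    (Cminus (Cplus (Cplus (Cminus (Cplus A (Cmult cm D)) (Cmult (Cmult (RtoC (/2)) cp) d2))
       (Cminus (Cplus B (Cmult cm D)) (Cmult (Cmult (RtoC (/2)) cp) d1)))
       (Cmult (Cmult (RtoC (/2)) cp) (Cplus (Cplus d1 d2) (Cmult Ci D))))
       (Cmult (Cmult (RtoC (/2)) (Cplus (Cmult cp Ci) cm)) D)) by ring.
  rewrite E1, E2, E3, E4. ring.
Qed.

Lemma cexpi_rel : Cplus (Cmult (cexpi (PI/4)) Ci) (cexpi (- (PI/4))) = RtoC 0.
Proof.
  unfold cexpi. rewrite cos_neg, sin_neg, sin_PI4, cos_PI4.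
  apply injective_projections; simpl; ring.
Qed.


Theorem mainTheorem2
  (xl xr xb xt T : R) (Hx : (xl < xr)%R) (Hy : (xb < xt)%R) (HT : (0 < T)%R)
  (u ut u1 u2 u11 u12 u21 u22 : R -> R -> R -> C)
  (* ut, u1, u2, u11, u12, u21, u22 are the partial derivatives of u on the closed
     cylinder closure(Omega) x [0,T] (one-sided on its boundary) *)
  (Hut : forall x1 x2 t, Cyl xl xr xb xt T (x1, x2, t) ->
           is_deriv_on (Icc 0 T) (fun s => u x1 x2 s) t (ut x1 x2 t))
  (Hu1 : forall x1 x2 t, Cyl xl xr xb xt T (x1, x2, t) ->
           is_deriv_on (Icc xl xr) (fun y => u y x2 t) x1 (u1 x1 x2 t))
  (Hu2 : forall x1 x2 t, Cyl xl xr xb xt T (x1, x2, t) ->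
           is_deriv_on (Icc xb xt) (fun y => u x1 y t) x2 (u2 x1 x2 t))
  (Hu11 : forall x1 x2 t, Cyl xl xr xb xt T (x1, x2, t) ->
           is_deriv_on (Icc xl xr) (fun y => u1 y x2 t) x1 (u11 x1 x2 t))
  (Hu12 : forall x1 x2 t, Cyl xl xr xb xt T (x1, x2, t) ->
           is_deriv_on (Icc xb xt) (fun y => u1 x1 y t) x2 (u12 x1 x2 t))
  (Hu21 : forall x1 x2 t, Cyl xl xr xb xt T (x1, x2, t) ->
           is_deriv_on (Icc xl xr) (fun y => u2 y x2 t) x1 (u21 x1 x2 t))
  (Hu22 : forall x1 x2 t, Cyl xl xr xb xt T (x1, x2, t) ->
           is_deriv_on (Icc xb xt) (fun y => u2 x1 y t) x2 (u22 x1 x2 t))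
  (* continuity of u, d_t u and all spatial derivatives up to order 2 *)
  (Hc : cont_on_cyl xl xr xb xt T u /\ cont_on_cyl xl xr xb xt T ut /\
         cont_on_cyl xl xr xb xt T u1 /\ cont_on_cyl xl xr xb xt T u2 /\
         cont_on_cyl xl xr xb xt T u11 /\ cont_on_cyl xl xr xb xt T u12 /\
         cont_on_cyl xl xr xb xt T u21 /\ cont_on_cyl xl xr xb xt T u22)
  (* zero initial data on the boundary of Omega *)
  (Hinit : forall x1 x2, Icc xl xr x1 -> Icc xb xt x2 ->
           (x1 = xl \/ x1 = xr \/ x2 = xb \/ x2 = xt) -> u x1 x2 0%R = RtoC 0)
  (* Schroedinger equation on closure(Omega) x (0,T] *)
  (Hpde : forall x1 x2 t, Icc xl xr x1 -> Icc xb xt x2 -> Ioc 0 T t ->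
           (Ci * ut x1 x2 t + u11 x1 x2 t + u22 x1 x2 t)%C = RtoC 0)
  (* W = d_t^{-1/2} u, computed pointwise in x *)
  (W : R -> R -> R -> C)
  (HW : forall x1 x2 t, Icc xl xr x1 -> Icc xb xt x2 -> Ioc 0 T t ->
           is_Ihalf (fun s => u x1 x2 s) t (W x1 x2 t))
  (* high-frequency boundary conditions on the closed vertical edges *)
  (HBCv : forall (a : bool) x2 t, Icc xb xt x2 -> Ioc 0 T t ->
     let x1 := if a then xr else xl in
     let dn := if a then u1 x1 x2 t else (- u1 x1 x2 t)%C in
     exists D d2 : C,
       is_deriv_on (Ioc 0 T) (fun s => W x1 x2 s) t D /\
       is_deriv2_on (Icc xb xt) (fun y => W x1 y t) x2 d2 /\
       (dn + cexpi (- (PI / 4)) * D - RtoC (/ 2) * cexpi (PI / 4) * d2)%C = RtoC 0)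
  (* high-frequency boundary conditions on the closed horizontal edges *)
  (HBCh : forall (b : bool) x1 t, Icc xl xr x1 -> Ioc 0 T t ->
     let x2 := if b then xt else xb in
     let dn := if b then u2 x1 x2 t else (- u2 x1 x2 t)%C in
     exists D d1 : C,
       is_deriv_on (Ioc 0 T) (fun s => W x1 x2 s) t D /\
       is_deriv2_on (Icc xl xr) (fun y => W y x2 t) x1 d1 /\
       (dn + cexpi (- (PI / 4)) * D - RtoC (/ 2) * cexpi (PI / 4) * d1)%C = RtoC 0) :
  (* corner compatibility condition at the four corners *)
  forall (a b : bool) t, Ioc 0 T t ->
    let x1 := if a then xr else xl in
    let x2 := if b then xt else xb in
    let dna := if a then u1 x1 x2 t else (- u1 x1 x2 t)%C in
    let dnb := if b then u2 x1 x2 t else (- u2 x1 x2 t)%C in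
    exists D : C,
      is_deriv_on (Ioc 0 T) (fun s => W x1 x2 s) t D /\
      (dna + dnb + RtoC (3 / 2) * cexpi (- (PI / 4)) * D)%C = RtoC 0.
Proof.
  intros a b t Ht. cbv zeta.
  destruct Hc as [cu [cut [cu1 [cu2 [cu11 [cu12 [cu21 cu22]]]]]]].
  assert (Ht' : 0 < t <= T) by (unfold Ioc in Ht; lra).
  assert (HT0 : 0 <= T) by lra.
  assert (Hx1 : Icc xl xr (if a then xr else xl)) by (destruct a; unfold Icc; lra).
  assert (Hx2 : Icc xb xt (if b then xt else xb)) by (destruct b; unfold Icc; lra).
  specialize (HBCv a (if b then xt else xb) t Hx2 Ht). specialize (HBCh b (if a then xr else xl) t Hx1 Ht).
  cbv zeta in HBCv, HBCh.
  set (x1 := if a then xr else xl) in *. set (x2 := if b then xt else xb) in *.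
  destruct HBCv as [D1 [d2 [HD1 [Hd2 E1]]]]. destruct HBCh as [D2 [d1 [HD2 [Hd1 E2]]]].
  assert (rep : forall y1 y2 s, Icc xl xr y1 -> Icc xb xt y2 -> Ioc 0 T s ->
    W y1 y2 s = Cmult (RtoC (2 * sqrt s / sqrt PI)) (CInt (fun r => u y1 y2 (clampR 0 T (s * (1 - r * r)))) 0 1)).
  { intros y1 y2 s H1 H2 Hs. apply rep_half; [unfold Ioc in Hs; lra| |apply HW; auto].
    apply (Wc_cyl xl xr xb xt T u y1 y2 cu H1 H2). }
  set (Dt := Cmult (RtoC (2 * sqrt t / sqrt PI)) (CInt (fun r => ut x1 x2 (clampR 0 T (t * (1 - r * r)))) 0 1)).
  assert (HTd : is_deriv_on (Ioc 0 T) (fun s => W x1 x2 s) t Dt).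
  { apply (deriv_ext (Ioc 0 T) (fun s => Cmult (RtoC (2 * sqrt s / sqrt PI)) (CInt (fun r => u x1 x2 (clampR 0 T (s * (1 - r * r)))) 0 1))).
    - intros s Hs. symmetry. apply rep; auto.
    - exact Ht.
    - apply time_deriv; auto.
      + intros s Hs. apply Hut. split; [exact Hx1|split; [exact Hx2|exact Hs]].
      + apply (Wc_cyl xl xr xb xt T u x1 x2 cu Hx1 Hx2).
      + apply (Wc_cyl xl xr xb xt T ut x1 x2 cut Hx1 Hx2).
      + apply Hinit; auto. unfold x1; destruct a; auto. }
  assert (ED1 : D1 = Dt) by (apply (deriv_unique _ _ _ _ _ HD1 HTd), pts_Ioc; auto).
  assert (ED2 : D2 = Dt) by (apply (deriv_unique _ _ _ _ _ HD2 HTd), pts_Ioc; auto).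
  set (k := 2 * sqrt t / sqrt PI).
  assert (Ed2 : d2 = Cmult (RtoC k) (CInt (fun r => u22 x1 x2 (clampR 0 T (t * (1 - r * r)))) 0 1)).
  { destruct Hd2 as [g [Hg1 Hg2]].
    set (Psi := fun y => Cmult (RtoC k) (CInt (fun r => u2 x1 y (clampR 0 T (t * (1 - r * r)))) 0 1)).
    assert (Hg : forall y, Icc xb xt y -> g y = Psi y).
    { intros y Hyy. apply (deriv_unique (Icc xb xt) (fun y => W x1 y t) y); [apply Hg1; auto| |apply pts_Icc; auto].
      apply (deriv_ext (Icc xb xt) (fun z => Cmult (RtoC k) (CInt (fun r => u x1 z (clampR 0 T (t * (1 - r * r)))) 0 1))).
      - intros z Hz. symmetry. apply rep; auto.
      - exact Hyy.
      - apply deriv_scal. apply (space_deriv (fun z tau => u x1 z tau) (fun z tau => u2 x1 z tau)); auto.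
        + intros z tau Hz Htau. apply Hu2. split; [exact Hx1|split; [exact Hz|exact Htau]].
        + apply (jcont2 xl xr xb xt T u x1 cu Hx1).
        + apply (jcont2 xl xr xb xt T u2 x1 cu2 Hx1). }
    apply (deriv_ext _ g Psi) in Hg2; [|exact Hg|exact Hx2].
    apply (deriv_unique (Icc xb xt) Psi x2); [exact Hg2| |apply pts_Icc; auto].
    apply deriv_scal. apply (space_deriv (fun z tau => u2 x1 z tau) (fun z tau => u22 x1 z tau)); auto.
    + intros z tau Hz Htau. apply Hu22. split; [exact Hx1|split; [exact Hz|exact Htau]].
    + apply (jcont2 xl xr xb xt T u2 x1 cu2 Hx1).
    + apply (jcont2 xl xr xb xt T u22 x1 cu22 Hx1). }
  assert (Ed1 : d1 = Cmult (RtoC k) (CInt (fun r => u11 x1 x2 (clampR 0 T (t * (1 - r * r)))) 0 1)).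
  { destruct Hd1 as [g [Hg1 Hg2]].
    set (Psi := fun y => Cmult (RtoC k) (CInt (fun r => u1 y x2 (clampR 0 T (t * (1 - r * r)))) 0 1)).
    assert (Hg : forall y, Icc xl xr y -> g y = Psi y).
    { intros y Hyy. apply (deriv_unique (Icc xl xr) (fun y => W y x2 t) y); [apply Hg1; auto| |apply pts_Icc; auto].
      apply (deriv_ext (Icc xl xr) (fun z => Cmult (RtoC k) (CInt (fun r => u z x2 (clampR 0 T (t * (1 - r * r)))) 0 1))).
      - intros z Hz. symmetry. apply rep; auto.
      - exact Hyy.
      - apply deriv_scal. apply (space_deriv (fun z tau => u z x2 tau) (fun z tau => u1 z x2 tau)); auto.
        + intros z tau Hz Htau. apply Hu1. split; [exact Hz|split; [exact Hx2|exact Htau]].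
        + apply (jcont1 xl xr xb xt T u x2 cu Hx2).
        + apply (jcont1 xl xr xb xt T u1 x2 cu1 Hx2). }
    apply (deriv_ext _ g Psi) in Hg2; [|exact Hg|exact Hx1].
    apply (deriv_unique (Icc xl xr) Psi x1); [exact Hg2| |apply pts_Icc; auto].
    apply deriv_scal. apply (space_deriv (fun z tau => u1 z x2 tau) (fun z tau => u11 z x2 tau)); auto.
    + intros z tau Hz Htau. apply Hu11. split; [exact Hz|split; [exact Hx2|exact Htau]].
    + apply (jcont1 xl xr xb xt T u1 x2 cu1 Hx2).
    + apply (jcont1 xl xr xb xt T u11 x2 cu11 Hx2). }
  assert (Esum : Cplus (Cplus d1 d2) (Cmult Ci D1) = RtoC 0).
  { rewrite Ed1, Ed2, ED1. unfold Dt. fold k.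
    set (F1 := fun r => u11 x1 x2 (clampR 0 T (t * (1 - r * r)))).
    set (F2 := fun r => u22 x1 x2 (clampR 0 T (t * (1 - r * r)))).
    set (F3 := fun r => ut x1 x2 (clampR 0 T (t * (1 - r * r)))).
    assert (c1 : CexInt F1 0 1) by (apply CexInt_cont; intros x;
      apply (comp_cont (fun s => u11 x1 x2 (clampR 0 T s)) t (Wc_cont T _ HT0 (Wc_cyl xl xr xb xt T u11 x1 x2 cu11 Hx1 Hx2)) x)).
    assert (c2 : CexInt F2 0 1) by (apply CexInt_cont; intros x;
      apply (comp_cont (fun s => u22 x1 x2 (clampR 0 T s)) t (Wc_cont T _ HT0 (Wc_cyl xl xr xb xt T u22 x1 x2 cu22 Hx1 Hx2)) x)).
    assert (c3 : CexInt F3 0 1) by (apply CexInt_cont; intros x;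
      apply (comp_cont (fun s => ut x1 x2 (clampR 0 T s)) t (Wc_cont T _ HT0 (Wc_cyl xl xr xb xt T ut x1 x2 cut Hx1 Hx2)) x)).
    assert (E : CInt (fun r => Cplus (Cplus (F1 r) (F2 r)) (Cmult Ci (F3 r))) 0 1 = RtoC 0).
    { rewrite (CInt_ext _ (fun _ => RtoC 0)).
      - unfold CInt. rewrite RInt_const. apply injective_projections; simpl; unfold scal; simpl; unfold mult; simpl; ring.
      - intros r Hr. rewrite Rmin_left, Rmax_right in Hr by lra. unfold F1, F2, F3.
        assert (0 < t * (1 - r * r) <= T) by (split; [apply Rmult_lt_0_compat; nra|nra]).
        rewrite clampR_id by lra. rewrite <- (Hpde x1 x2 (t * (1 - r * r)) Hx1 Hx2) by (unfold Ioc; lra). ring. }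
    rewrite (CInt_plus _ _ 0 1 (CexInt_plus _ _ _ _ c1 c2) (CexInt_Ci _ _ _ c3)) in E.
    rewrite (CInt_plus _ _ 0 1 c1 c2), (CInt_Ci _ _ _ c3) in E.
    replace (Cplus (Cplus (Cmult (RtoC k) (CInt F1 0 1)) (Cmult (RtoC k) (CInt F2 0 1))) (Cmult Ci (Cmult (RtoC k) (CInt F3 0 1))))
      with (Cmult (RtoC k) (Cplus (Cplus (CInt F1 0 1) (CInt F2 0 1)) (Cmult Ci (CInt F3 0 1)))) by ring.
    rewrite E. ring. }
  exists D1. split; [exact HD1|].
  rewrite ED2, <- ED1 in E2.
  exact (final_alg _ _ D1 d1 d2 _ _ E1 E2 Esum cexpi_rel).
Qed.
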